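(* Consider decorated ideal hyperbolic triangles admitting a point equidistant to their three horocycles. The following correspondence is a bijection between: (i) triples $(\ell_1,\ell_2,\ell_3)\in\mathbb{R}^3$, up to a common additive constant, of signed side lengths of such decorated triangles; (ii) triples $(\lambda_1,\lambda_2,\lambda_3)\in\mathbb{R}_{>0}^3$, up to a common multiplicative constant, satisfying the strict triangle inequalities; (iii) triples of angles $\theta_1,\theta_2,\theta_3\in(0,\pi)$ with $\theta_1+\theta_2+\theta_3=2\pi$. The relations are $$\lambda_i=\sqrt{2e^{\ell_i}},\qquad \frac{\sqrt{e^{\ell_1}}}{\sin\theta_1}=\frac{\sqrt{e^{\ell_2}}}{\sin\theta_2}=\frac{\sqrt{e^{\ell_3}}}{\sin\theta_3}.$$ Moreover the angles $\theta_1,\theta_2,\theta_3$ formed by the three hyperbolic bisectors at the equidistant point $\zeta$ coincide with the angles formed at the circumcenter of the Euclidean triangle with side lengths $\lambda_1,\lambda_2,\lambda_3$ by its three perpendicular bisectors. Finally, for $i=1,2,3$, the signed hyperbolic length of the bisector connecting the $i$th side of the hyperbolic triangle to $\zeta$ (taken negative if $\zeta$ lies outside the triangle beyond that side) equals $\operatorname{arctanh}\cos(\pi-\theta_i)$.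
   Context: A decorated ideal triangle is an ideal hyperbolic triangle with distinct ideal vertices $x_1,x_2,x_3\in\partial\mathbb{H}$ and a horocycle centered at each ideal vertex. For side $i$, $\ell_i$ is the signed hyperbolic distance along side $i$ between the horocycles at its two endpoints (negative if these horocycles intersect). The bisector of side $i$ is the locus of points equidistant to the two horocycles at the endpoints of side $i$; it is a geodesic orthogonal to side $i$. When there is a point $\zeta$ equidistant from the three horocycles, the three bisectors meet at $\zeta$; the rays from $\zeta$ along the bisectors towards the three sides split the full angle at $\zeta$ into three sectors, and $\theta_i$ is the angle of the sector bounded by the rays towards the two sides other than side $i$. The same definitions apply to a Euclidean triangle with side lengths $\lambda_i$, its circumcenter, and the rays from the circumcenter towards the sides along the perpendicular bisectors. *)

(* Defs.v *)
(* concrete real numbers R.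
   Hyperbolic plane = hyperboloid model in Minkowski space R^{1,2}. *)
From Stdlib Require Import Reals Lra.
Open Scope R_scope.

Record V3 := mkV3 { c0 : R; c1 : R; c2 : R }.

Definition vadd (u v : V3) : V3 := mkV3 (c0 u + c0 v) (c1 u + c1 v) (c2 u + c2 v).
Definition vscale (a : R) (v : V3) : V3 := mkV3 (a * c0 v) (a * c1 v) (a * c2 v).
Definition vsub (u v : V3) : V3 := vadd u (vscale (-1) v).

Definition mink (u v : V3) : R := - c0 u * c0 v + c1 u * c1 v + c2 u * c2 v.

(* Euclidean 3x3 determinant det(u,v,w) (rows u, v, w); used for orientation /
   sides of planes through the origin. *)
Definition det3 (u v w : V3) : R :=
  c0 u * (c1 v * c2 w - c2 v * c1 w)
  - c1 u * (c0 v * c2 w - c2 v * c0 w)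
  + c2 u * (c0 v * c1 w - c1 v * c0 w).

Definition hpoint (X : V3) : Prop := mink X X = -1 /\ 0 < c0 X.

Definition arcosh (t : R) : R := ln (t + sqrt (t * t - 1)).
Definition artanh (x : R) : R := ln ((1 + x) / (1 - x)) / 2.

Definition hdist (X Y : V3) : R := arcosh (- mink X Y).

(* A decorated ideal point (ideal point + horocycle centered at it) is a
   future light-like vector L; its ideal point is the ray R_{>0} L of the
   light cone, its horocycle is {X in H | <X,L> = -1}, and its horoball is
   {X in H | -<X,L> < 1}. *)
Definition lightlike (L : V3) : Prop := mink L L = 0 /\ 0 < c0 L.
Definition on_horo (X L : V3) : Prop := mink X L = -1.
Definition in_horoball (X L : V3) : Prop := - mink X L < 1.

(* signed distance from a point X of H to the horocycle of L
   (negative iff X lies inside the horoball) *)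
Definition hsd (X L : V3) : R := ln (- mink X L).

Definition distinct_ideal (L M : V3) : Prop := ~ (exists c, 0 < c /\ M = vscale c L).

Definition dec_triangle (L1 L2 L3 : V3) : Prop :=
  lightlike L1 /\ lightlike L2 /\ lightlike L3 /\
  distinct_ideal L1 L2 /\ distinct_ideal L2 L3 /\ distinct_ideal L3 L1.

Definition on_side (X Lj Lk : V3) : Prop :=
  hpoint X /\ exists a b, 0 < a /\ 0 < b /\ X = vadd (vscale a Lj) (vscale b Lk).

(* X and the ideal vertex [Li] lie strictly on opposite sides of the geodesic
   through [Lj], [Lk] ("X is beyond that side") *)
Definition beyond_side (X Li Lj Lk : V3) : Prop :=
  det3 Lj Lk X * det3 Lj Lk Li < 0.

(* signed length of the side with endpoints [Lj],[Lk]: signed distance along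
   the side between the two horocycles (negative if they intersect) *)
Definition side_len (Lj Lk : V3) (l : R) : Prop :=
  exists Pj Pk,
    on_side Pj Lj Lk /\ on_side Pk Lj Lk /\ on_horo Pj Lj /\ on_horo Pk Lk /\
    l = (if Rlt_dec (- mink Pj Lk) 1 then - hdist Pj Pk else hdist Pj Pk).

Definition equidistant (Z L1 L2 L3 : V3) : Prop :=
  hpoint Z /\ hsd Z L1 = hsd Z L2 /\ hsd Z L2 = hsd Z L3.

Definition on_bisector (X Lj Lk : V3) : Prop := hpoint X /\ hsd X Lj = hsd X Lk.

Definition georay (Z v : V3) (t : R) : V3 := vadd (vscale (cosh t) Z) (vscale (sinh t) v).

Definition unit_tangent (Z v : V3) : Prop := mink v Z = 0 /\ mink v v = 1.

(* v is the unit direction at Z of the ray from Z along the bisector of the side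
   opposite [Li] (side [Lj][Lk]) going towards/across that side, i.e. the ray lies
   in the bisector and eventually lies beyond the side (outward orientation). *)
Definition hray (Z Li Lj Lk v : V3) : Prop :=
  unit_tangent Z v /\
  (forall t, 0 <= t -> on_bisector (georay Z v t) Lj Lk) /\
  (exists T, forall t, T <= t -> beyond_side (georay Z v t) Li Lj Lk).

(* counterclockwise angle in [0, 2 pi) from unit tangent v to unit tangent w at Z
   (tangent plane at Z oriented by det3 Z . .) *)
Definition hccw (Z v w : V3) : R :=
  if Rle_dec 0 (det3 Z v w) then acos (mink v w) else 2 * PI - acos (mink v w).

(* the angle of the sector bounded by the rays vj, vk and not containing ray vi,
   (rays given by unit tangents at Z) *)

Definition hsector (Z vi vj vk : V3) : R :=
  if Rlt_dec (hccw Z vj vi) (hccw Z vj vk) then 2 * PI - hccw Z vj vk else hccw Z vj vk.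

(* signed length of the bisector from the side opposite [Li] to Z:
   distance from Z to the foot F (intersection of bisector and side),
   negative iff Z is beyond that side *)
Definition bis_len (Z Li Lj Lk : V3) (s : R) : Prop :=
  exists F, on_side F Lj Lk /\ on_bisector F Lj Lk /\
    s = (if Rlt_dec (det3 Lj Lk Z * det3 Lj Lk Li) 0 then - hdist Z F else hdist Z F).

Definition pt2 := (R * R)%type.
Definition padd (p q : pt2) : pt2 := (fst p + fst q, snd p + snd q).
Definition pscale (a : R) (p : pt2) : pt2 := (a * fst p, a * snd p).
Definition edot (p q : pt2) : R := fst p * fst q + snd p * snd q.
Definition ecross (p q : pt2) : R := fst p * snd q - snd p * fst q.
Definition psub (p q : pt2) : pt2 := (fst p - fst q, snd p - snd q).
Definition edist (p q : pt2) : R := sqrt (edot (psub p q) (psub p q)).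

Definition orient (a b c : pt2) : R := ecross (psub b a) (psub c a).

(* triangle with side lengths m1 = |P2 P3|, m2 = |P3 P1|, m3 = |P1 P2| *)
Definition eucl_triangle (A B C : pt2) (m1 m2 m3 : R) : Prop :=
  edist B C = m1 /\ edist C A = m2 /\ edist A B = m3.

Definition circumcenter (O A B C : pt2) : Prop :=
  edist O A = edist O B /\ edist O B = edist O C.

(* u is the unit direction of the ray from O along the perpendicular bisector of
   the side Pj Pk (opposite Pi) going towards/across that side (outward orientation):
   the ray lies in the perpendicular bisector and eventually lies strictly on the
   other side of line Pj Pk from Pi *)
Definition eray (O Pi Pj Pk u : pt2) : Prop :=
  edot u u = 1 /\
  (forall t, 0 <= t -> edist (padd O (pscale t u)) Pj = edist (padd O (pscale t u)) Pk) /\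
  (exists T, forall t, T <= t -> orient Pj Pk (padd O (pscale t u)) * orient Pj Pk Pi < 0).

Definition eccw (u w : pt2) : R :=
  if Rle_dec 0 (ecross u w) then acos (edot u w) else 2 * PI - acos (edot u w).

Definition esector (ui uj uk : pt2) : R :=
  if Rlt_dec (eccw uj ui) (eccw uj uk) then 2 * PI - eccw uj uk else eccw uj uk.

(* (i) signed side lengths of decorated ideal triangles admitting an equidistant point;
   side i is the side opposite vertex i *)
Definition realizable (l1 l2 l3 : R) : Prop :=
  exists L1 L2 L3 Z, dec_triangle L1 L2 L3 /\ equidistant Z L1 L2 L3 /\
    side_len L2 L3 l1 /\ side_len L3 L1 l2 /\ side_len L1 L2 l3.

Definition tri_ineq (m1 m2 m3 : R) : Prop :=
  0 < m1 /\ 0 < m2 /\ 0 < m3 /\ m1 < m2 + m3 /\ m2 < m3 + m1 /\ m3 < m1 + m2.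

Definition angle_triple (t1 t2 t3 : R) : Prop :=
  0 < t1 < PI /\ 0 < t2 < PI /\ 0 < t3 < PI /\ t1 + t2 + t3 = 2 * PI.

Definition sine_rel (l1 l2 l3 t1 t2 t3 : R) : Prop :=
  sqrt (exp l1) / sin t1 = sqrt (exp l2) / sin t2 /\
  sqrt (exp l2) / sin t2 = sqrt (exp l3) / sin t3.

Definition lam (l : R) : R := sqrt (2 * exp l).

(* Main.v *)
From Pilot Require Import Defs.
From Stdlib Require Import Reals.
From Stdlib Require Import Lra Psatz.
Import Pilot.Defs.
Open Scope R_scope.

Definition mcross (a b : V3) : V3 :=
  mkV3 (-(c1 a * c2 b - c2 a * c1 b)) (c2 a * c0 b - c0 a * c2 b) (c0 a * c1 b - c1 a * c0 b).

Lemma det3_mcross a b c : det3 a b c = mink (mcross a b) c.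
Proof. destruct a, b, c; unfold det3, mink, mcross; simpl; ring. Qed.

Lemma gram3 x y z p q s : det3 x y z * det3 p q s =
  - (mink x p * (mink y q * mink z s - mink y s * mink z q)
     - mink x q * (mink y p * mink z s - mink y s * mink z p)
     + mink x s * (mink y p * mink z q - mink y q * mink z p)).
Proof. destruct x, y, z, p, q, s; unfold det3, mink; simpl; ring. Qed.

Lemma binet a b c d : mink (mcross a b) (mcross c d) = -(mink a c * mink b d - mink a d * mink b c).
Proof. destruct a, b, c, d; unfold mink, mcross; simpl; ring. Qed.

Lemma cramer a b c x : vscale (det3 a b c) x =
  vadd (vadd (vscale (det3 x b c) a) (vscale (det3 a x c) b)) (vscale (det3 a b x) c).
Proof. destruct a, b, c, x; unfold vscale, vadd, det3; simpl; f_equal; ring. Qed.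

Lemma sq0 a b : a^2 + b^2 = 0 -> a = 0 /\ b = 0.
Proof.
  intro H. assert (Ha : 0 <= a^2) by apply pow2_ge_0. assert (Hb : 0 <= b^2) by apply pow2_ge_0.
  split; apply Rsqr_eq_0; unfold Rsqr; simpl in *; lra.
Qed.

Lemma tpos Z L : hpoint Z -> lightlike L -> 0 < - mink Z L.
Proof.
  destruct Z as [z0 z1 z2], L as [l0 l1 l2]; unfold hpoint, lightlike, mink; simpl.
  intros [HZ Hz0] [HL Hl0].
  assert (Hcs : (z1*l1+z2*l2)^2 <= (z1^2+z2^2)*(l1^2+l2^2)).
  { assert (0 <= (z1*l2-z2*l1)^2) by apply pow2_ge_0. nra. }
  assert (P : 0 < z0*l0) by nra.
  destruct (Rlt_or_le (z1*l1+z2*l2) (z0*l0)) as [H|H]; [lra|].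
  exfalso. assert ((z0*l0)^2 <= (z1*l1+z2*l2)^2) by nra. nra.
Qed.

Lemma hp_c0 X Z : mink X X = -1 -> hpoint Z -> mink X Z < 0 -> 0 < c0 X.
Proof.
  destruct Z as [z0 z1 z2], X as [x0 x1 x2]; unfold hpoint, mink; simpl.
  intros HX [HZ Hz0] Hn.
  assert (Hcs : (z1*x1+z2*x2)^2 <= (z1^2+z2^2)*(x1^2+x2^2)).
  { assert (0 <= (z1*x2-z2*x1)^2) by apply pow2_ge_0. nra. }
  destruct (Rlt_or_le 0 x0) as [H|H]; [lra|]. exfalso.
  assert (x1*z1 + x2*z2 < x0*z0) by lra.
  assert (x0*z0 <= 0) by nra.
  assert ((x0*z0)^2 < (x1*z1+x2*z2)^2) by nra.
  nra.
Qed.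

Lemma mpos L M : lightlike L -> lightlike M -> distinct_ideal L M -> 0 < - mink L M.
Proof.
  intros HL HM Hd.
  destruct L as [l0 l1 l2], M as [m0 m1 m2]; unfold lightlike, mink in *; simpl in *.
  destruct HL as [HL Hl0], HM as [HM Hm0].
  assert (E : (l1*m2 - l2*m1)^2 + (l1*m1+l2*m2)^2 = (l1^2+l2^2)*(m1^2+m2^2)) by ring.
  assert (P : 0 < l0*m0) by nra.
  destruct (Rlt_or_le (l1*m1+l2*m2) (l0*m0)) as [H|H]; [lra|].
  exfalso. assert (Hsq : (l0*m0)^2 <= (l1*m1+l2*m2)^2) by (apply pow_incr; lra).
  assert (E' : (l1*m2 - l2*m1)^2 + (l1*m1+l2*m2)^2 = (l0*m0)^2).
  { rewrite E. replace (l1^2+l2^2) with (l0*l0) by lra. replace (m1^2+m2^2) with (m0*m0) by lra. ring. }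
  assert (Hs2 : (l1*m1+l2*m2)^2 = (l0*m0)^2).
  { assert (0 <= (l1*m2 - l2*m1)^2) by apply pow2_ge_0. lra. }
  assert (Heq : l1*m1+l2*m2 = l0*m0).
  { assert (Hf : (l1*m1+l2*m2 - l0*m0) * (l1*m1+l2*m2 + l0*m0) = 0) by (ring_simplify; nra).
    apply Rmult_integral in Hf. destruct Hf; lra. }
  assert (K : (l0*m1 - m0*l1)^2 + (l0*m2 - m0*l2)^2 = 0).
  { assert (E2 : (l0*m1 - m0*l1)^2 + (l0*m2 - m0*l2)^2 =
       l0^2*(m1^2+m2^2) - 2*l0*m0*(l1*m1+l2*m2) + m0^2*(l1^2+l2^2)) by ring.
    rewrite E2, Heq. nra. }
  destruct (sq0 _ _ K) as [K1 K2].
  apply Hd. exists (m0/l0). split. apply Rdiv_lt_0_compat; lra.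
  unfold vscale; simpl. f_equal; field_simplify; try lra; apply Rmult_eq_reg_r with l0; try lra;
  field_simplify; lra.
Qed.

Lemma mink_sym X Y : mink X Y = mink Y X.
Proof. unfold mink; ring. Qed.
Lemma mink_comb_l a b X Y W : mink (vadd (vscale a X) (vscale b Y)) W = a*mink X W + b*mink Y W.
Proof. unfold mink, vadd, vscale; simpl; ring. Qed.
Lemma mink_comb_r a b X Y W : mink W (vadd (vscale a X) (vscale b Y)) = a*mink W X + b*mink W Y.
Proof. unfold mink, vadd, vscale; simpl; ring. Qed.
Lemma mink_scale_l a X W : mink (vscale a X) W = a * mink X W.
Proof. unfold mink, vscale; simpl; ring. Qed.
Lemma mink_scale_r a X W : mink W (vscale a X) = a * mink W X.
Proof. unfold mink, vscale; simpl; ring. Qed.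
Lemma mink_add_l X Y W : mink (vadd X Y) W = mink X W + mink Y W.
Proof. unfold mink, vadd; simpl; ring. Qed.
Lemma mink_add_r X Y W : mink W (vadd X Y) = mink W X + mink W Y.
Proof. unfold mink, vadd; simpl; ring. Qed.

Lemma ln_abs_ach x : 0 < x -> arcosh ((x + / x) / 2) = Rabs (ln x).
Proof.
  intro Hx. unfold arcosh.
  assert (E : (x + / x) / 2 * ((x + / x) / 2) - 1 = Rsqr ((x - / x)/2)).
  { unfold Rsqr. field. lra. }
  rewrite E, sqrt_Rsqr_abs.
  destruct (Rle_or_lt 1 x) as [H1|H1].
  - assert (/ x <= 1). { rewrite <- Rinv_1. apply Rinv_le_contravar; lra. }
    rewrite Rabs_right by lra.
    replace ((x + / x) / 2 + (x - / x) / 2) with x by (field; lra).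
    rewrite Rabs_right; [reflexivity|].
    rewrite <- ln_1. apply Rle_ge. destruct H1 as [H1|H1]; [left; apply ln_increasing; lra| subst; right; reflexivity].
  - assert (1 < / x). { rewrite <- Rinv_1. apply Rinv_lt_contravar; lra. }
    rewrite Rabs_left by lra.
    replace ((x + / x) / 2 + - ((x - / x) / 2)) with (/ x) by (field; lra).
    rewrite ln_Rinv by lra.
    rewrite Rabs_left; [reflexivity|].
    rewrite <- ln_1. apply ln_increasing; lra.
Qed.

Lemma sl_val Lj Lk Pj Pk : lightlike Lj -> lightlike Lk -> 0 < - mink Lj Lk ->
  on_side Pj Lj Lk -> on_side Pk Lj Lk -> on_horo Pj Lj -> on_horo Pk Lk ->
  (if Rlt_dec (- mink Pj Lk) 1 then - hdist Pj Pk else hdist Pj Pk) = ln (- mink Lj Lk / 2).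
Proof.
  intros [Hj _] [Hk _] Hm [[HPj _] [a [b [Ha [Hb EPj]]]]] [[HPk _] [a' [b' [Ha' [Hb' EPk]]]]] Hhj Hhk.
  unfold on_horo in *.
  set (m := - mink Lj Lk) in *.
  assert (Sjk : mink Lj Lk = - m) by (unfold m; ring).
  assert (Skj : mink Lk Lj = - m) by (rewrite mink_sym; unfold m; ring).
  clearbody m.
  subst Pj Pk.
  repeat (rewrite mink_comb_l in Hhj || rewrite mink_comb_r in Hhj).
  repeat (rewrite mink_comb_l in Hhk || rewrite mink_comb_r in Hhk).
  repeat (rewrite mink_comb_l in HPj || rewrite mink_comb_r in HPj).
  repeat (rewrite mink_comb_l in HPk || rewrite mink_comb_r in HPk).
  rewrite Hj, Skj in Hhj. rewrite Hk, Sjk in Hhk.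
  rewrite Hj, Hk, Sjk, Skj in HPj. rewrite Hj, Hk, Sjk, Skj in HPk.
  assert (Eb : b = / m).
  { apply Rmult_eq_reg_r with m; [|lra]. rewrite Rinv_l by lra. nra. }
  assert (Ea' : a' = / m).
  { apply Rmult_eq_reg_r with m; [|lra]. rewrite Rinv_l by lra. nra. }
  subst b a'.
  assert (Ea : a = / 2).
  { apply Rmult_eq_reg_r with 2; [|lra]. rewrite Rinv_l by lra.
    assert (Hi : / m * m = 1) by (field; lra).
    replace (a * (a * 0 + / m * - m) + / m * (a * - m + / m * 0)) with (-2 * a * (/ m * m)) in HPj by ring.
    rewrite Hi in HPj. lra. }
  assert (Eb' : b' = / 2).
  { apply Rmult_eq_reg_r with 2; [|lra]. rewrite Rinv_l by lra.
    assert (Hi : / m * m = 1) by (field; lra).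
    replace (/ m * (/ m * 0 + b' * - m) + b' * (/ m * - m + b' * 0)) with (-2 * b' * (/ m * m)) in HPk by ring.
    rewrite Hi in HPk. lra. }
  subst a b'.
  unfold hdist.
  repeat (rewrite mink_comb_l || rewrite mink_comb_r).
  rewrite Hj, Hk, Sjk, Skj.

  replace (- (/ 2 * (/ m * 0 + / 2 * - m) + / m * (/ m * - m + / 2 * 0))) with ((m/2 + / (m/2))/2) by (field; lra).
  rewrite ln_abs_ach by lra.
  replace (- (/ 2 * - m + / m * 0)) with (m/2) by (field; lra).
  destruct (Rlt_dec (m/2) 1) as [H|H].
  - rewrite Rabs_left; [ring|]. rewrite <- ln_1. apply ln_increasing; lra.
  - rewrite Rabs_right; [ring|]. rewrite <- ln_1. apply Rle_ge.
    destruct (Rle_lt_or_eq_dec 1 (m/2)) as [H'|H']; [lra| left; apply ln_increasing; lra| rewrite <- H'; right; reflexivity].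
Qed.

Definition Xf a b c := (b*b + c*c - a*a) / (2*b*c).
Definition Hf a b c := (a+b+c)*(-a+b+c)*(a-b+c)*(a+b-c).
Definition Sf a b c := sqrt (Hf a b c) / (2*a*b*c).

Lemma tri_rot a b c : tri_ineq a b c -> tri_ineq b c a.
Proof. unfold tri_ineq; lra. Qed.

Lemma tri_H a b c : tri_ineq a b c -> 0 < Hf a b c.
Proof.
  unfold tri_ineq, Hf; intros (?&?&?&?&?&?).
  repeat apply Rmult_lt_0_compat; lra.
Qed.

Lemma Hf_rot a b c : Hf b c a = Hf a b c.
Proof. unfold Hf; ring. Qed.

Lemma one_minus_X2 a b c : 0 < b -> 0 < c -> 1 - (Xf a b c)^2 = Hf a b c / (4*(b*c)^2).
Proof. intros; unfold Xf, Hf; field; lra. Qed.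

Lemma X_bound a b c : tri_ineq a b c -> -1 < Xf a b c < 1.
Proof.
  intro T. pose proof (tri_H _ _ _ T) as H. destruct T as (?&?&?&_).
  pose proof (one_minus_X2 a b c ltac:(lra) ltac:(lra)) as E.
  assert (0 < Hf a b c / (4*(b*c)^2)).
  { apply Rdiv_lt_0_compat; [lra|]. assert (0 < b*c) by nra. nra. }
  assert (Xf a b c ^2 < 1) by lra.
  split; nra.
Qed.

Lemma sin_acosX a b c : tri_ineq a b c -> sin (acos (Xf a b c)) = a * Sf a b c.
Proof.
  intro T. pose proof (X_bound _ _ _ T) as XB. pose proof (tri_H _ _ _ T) as H.
  destruct T as (?&?&?&_).
  rewrite sin_acos by lra.
  replace (1 - (Xf a b c)²) with (1 - (Xf a b c)^2) by (unfold Rsqr; ring).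
  rewrite one_minus_X2 by lra.
  unfold Sf.
  assert (0 < b*c) by nra. rewrite sqrt_div_alt by nra.
  replace (4 * (b*c)^2) with ((2*b*c)*(2*b*c)) by ring.
  rewrite sqrt_square by nra.
  field; lra.
Qed.

Lemma angle_sum a b c : tri_ineq a b c ->
  acos (Xf a b c) + acos (Xf b c a) + acos (Xf c a b) = PI.
Proof.
  intro T. pose proof T as T2. apply tri_rot in T2. pose proof T2 as T3. apply tri_rot in T3.
  pose proof (X_bound _ _ _ T) as B1. pose proof (X_bound _ _ _ T2) as B2. pose proof (X_bound _ _ _ T3) as B3.
  pose proof (sin_acosX _ _ _ T) as S1. pose proof (sin_acosX _ _ _ T2) as S2.
  pose proof (tri_H _ _ _ T) as HH.
  unfold Sf in S2. rewrite Hf_rot in S2. fold (Sf a b c) in S2.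
  replace (2 * b * c * a) with (2*a*b*c) in S2 by ring. fold (Sf a b c) in S2.
  destruct T as (Ha&Hb&Hc&_).
  set (al := acos (Xf a b c)) in *. set (be := acos (Xf b c a)) in *.
  assert (C1 : cos al = Xf a b c) by (apply cos_acos; lra).
  assert (C2 : cos be = Xf b c a) by (apply cos_acos; lra).
  assert (HS : 0 < Sf a b c).
  { unfold Sf. apply Rdiv_lt_0_compat. apply sqrt_lt_R0; lra. repeat apply Rmult_lt_0_compat; lra. }
  assert (SS : Sf a b c * Sf a b c = Hf a b c / (2*a*b*c)^2).
  { unfold Sf. assert (0 < 2*a*b*c) by (repeat apply Rmult_lt_0_compat; lra).
    replace (sqrt (Hf a b c) / (2 * a * b * c) * (sqrt (Hf a b c) / (2 * a * b * c)))
      with ((sqrt (Hf a b c))^2 / (2*a*b*c)^2) by (field; lra).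
    rewrite pow2_sqrt by lra. reflexivity. }
  assert (Sin : sin (al + be) = c * Sf a b c).
  { rewrite sin_plus, S1, S2, C1, C2.
    assert (P : a * Xf b c a + Xf a b c * b = c) by (unfold Xf; field; lra).
    transitivity (Sf a b c * (a * Xf b c a + Xf a b c * b)); [ring| rewrite P; ring]. }
  assert (Cos : cos (al + be) = - Xf c a b).
  { rewrite cos_plus, S1, S2, C1, C2.
    replace (a * Sf a b c * (b * Sf a b c)) with (a*b*(Sf a b c * Sf a b c)) by ring.
    rewrite SS. unfold Xf, Hf. field. lra. }
  pose proof (acos_bound (Xf a b c)) as A1. pose proof (acos_bound (Xf b c a)) as A2.
  fold al in A1. fold be in A2.
  assert (Lt : al + be < PI).
  { destruct (Rlt_or_le (al+be) PI) as [h|h]; auto. exfalso.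
    assert (0 < c * Sf a b c) by nra.
    destruct h as [h|h].
    - destruct (Rlt_or_le (al+be) (2*PI)) as [h2|h2].
      + pose proof (sin_lt_0 (al+be) h h2). lra.
      + assert (al + be = 2*PI) by lra. rewrite H0 in Sin. rewrite sin_2PI in Sin. lra.
    - rewrite <- h in Sin. rewrite sin_PI in Sin. lra. }
  assert (E : acos (cos (al+be)) = al + be) by (apply acos_cos; lra).
  rewrite Cos, acos_opp in E. lra.
Qed.
Lemma proj_eq a b c al be ga k : al + be + ga = PI -> k <> 0 ->
  sin al = k*a -> sin be = k*b -> sin ga = k*c -> a = b * cos ga + c * cos be.
Proof.
  intros S Hk Sa Sb Sc.
  assert (E : sin al = sin (be + ga)) by (replace al with (PI - (be+ga)) by lra; apply sin_PI_x).
  rewrite sin_plus, Sa, Sb, Sc in E.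
  apply Rmult_eq_reg_l with k; auto. rewrite E. ring.
Qed.

Lemma uni_cos a b c al be ga k : 0 < a -> 0 < b -> 0 < c -> al + be + ga = PI -> k <> 0 ->
  sin al = k*a -> sin be = k*b -> sin ga = k*c -> cos al = Xf a b c.
Proof.
  intros Ha Hb Hc S Hk Sa Sb Sc.
  pose proof (proj_eq a b c al be ga k S Hk Sa Sb Sc) as P1.
  pose proof (proj_eq b c a be ga al k ltac:(lra) Hk Sb Sc Sa) as P2.
  pose proof (proj_eq c a b ga al be k ltac:(lra) Hk Sc Sa Sb) as P3.
  assert (Q1 : a*a = a*(b * cos ga + c * cos be)) by (f_equal; exact P1).
  assert (Q2 : b*b = b*(c * cos al + a * cos ga)) by (f_equal; exact P2).
  assert (Q3 : c*c = c*(a * cos be + b * cos al)) by (f_equal; exact P3).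
  assert (E : b*b + c*c - a*a = 2*b*c*cos al) by (rewrite Q1, Q2, Q3; ring).
  unfold Xf. rewrite E. field. lra.
Qed.

Ltac rwm := repeat match goal with H : mink ?a ?b = _ |- context [mink ?a ?b] => rewrite H end.

Lemma mink_vsub_l a b c : mink (vsub a b) c = mink a c - mink b c.
Proof. unfold mink, vsub, vadd, vscale; simpl; ring. Qed.
Lemma mink_vsub_r a b c : mink c (vsub a b) = mink c a - mink c b.
Proof. unfold mink, vsub, vadd, vscale; simpl; ring. Qed.
Lemma mink_georay Z v t W : mink (georay Z v t) W = cosh t * mink Z W + sinh t * mink v W.
Proof. unfold mink, georay, vadd, vscale; simpl; ring. Qed.
Lemma det3_georay a b Z v t : det3 a b (georay Z v t) = cosh t * det3 a b Z + sinh t * det3 a b v.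
Proof. unfold det3, georay, vadd, vscale; simpl; ring. Qed.
Lemma det3_scale3 a b c x : det3 a b (vscale c x) = c * det3 a b x.
Proof. unfold det3, vscale; simpl; ring. Qed.
Lemma georay_self Z v t : mink (georay Z v t) (georay Z v t) =
  cosh t ^2 * mink Z Z + 2 * cosh t * sinh t * mink Z v + sinh t ^2 * mink v v.
Proof. unfold mink, georay, vadd, vscale; simpl; ring. Qed.
Lemma cosh_sinh t : cosh t ^2 - sinh t ^2 = 1.
Proof.
  unfold cosh, sinh. assert (exp t * exp (-t) = 1) by (rewrite <- exp_plus; replace (t + - t) with 0 by ring; apply exp_0).
  field_simplify. nra.
Qed.
Lemma cosh_pos t : 0 < cosh t.
Proof. unfold cosh. pose proof (exp_pos t). pose proof (exp_pos (-t)). lra. Qed.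
Lemma sinh_1_pos : 0 < sinh 1.
Proof. rewrite <- sinh_0. apply sinh_lt. lra. Qed.

Lemma ev_pos A B : A^2 < B^2 -> 0 < B -> exists T, forall t, T <= t -> 0 < cosh t * A + sinh t * B.
Proof.
  intros HAB HB.
  assert (HA : Rabs A < B).
  { destruct (Rcase_abs A); [rewrite Rabs_left by lra | rewrite Rabs_right by lra]; nra. }
  pose proof (Rabs_pos A) as HA0.
  set (M := (B + Rabs A)/(B - Rabs A) + 1).
  assert (HM1 : (B + Rabs A)/(B - Rabs A) > 0) by (apply Rdiv_lt_0_compat; lra).
  exists (ln M). intros t Ht.
  assert (EM : M <= exp t).
  { rewrite <- (exp_ln M) by (unfold M; lra). destruct Ht as [Ht|Ht]; [left; apply exp_increasing; auto | rewrite Ht; lra]. }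
  set (E := exp t) in *.
  assert (HE1 : 1 < E) by (unfold M in EM; lra).
  assert (HE2 : (B + Rabs A) < E * E * (B - Rabs A)).
  { assert ((B + Rabs A) = (B + Rabs A)/(B - Rabs A) * (B - Rabs A)) by (field; lra).
    assert ((B + Rabs A)/(B - Rabs A) < E) by (unfold M in EM; lra).
    assert (E <= E*E) by nra. nra. }
  unfold cosh, sinh. rewrite exp_Ropp. fold E.
  assert (HAl : - Rabs A <= A) by (pose proof (Rle_abs (-A)); rewrite Rabs_Ropp in *; lra).
  assert (0 < E) by lra.
  assert (Hi : E * / E = 1) by (field; lra).
  assert (0 < / E) by (apply Rinv_0_lt_compat; lra).
  assert (K : (E + / E) / 2 * A >= (E + / E)/2 * (- Rabs A)) by (apply Rle_ge, Rmult_le_compat_l; lra).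
  assert (K2 : 0 < (E - / E)/2 * B + (E + / E)/2 * (- Rabs A)).
  { apply Rmult_lt_reg_l with (2*E); [lra|].
    replace (2 * E * ((E - / E) / 2 * B + (E + / E) / 2 * - Rabs A)) with (E*E*(B - Rabs A) - (B + Rabs A)) by (field; lra).
    lra. }
  lra.
Qed.

Definition setting Z Li Lj Lk r mi mj mk := hpoint Z /\ lightlike Li /\ lightlike Lj /\ lightlike Lk /\
  0 < r /\ mink Z Li = -r /\ mink Z Lj = -r /\ mink Z Lk = -r /\
  mink Lj Lk = -mi /\ mink Lk Li = -mj /\ mink Li Lj = -mk /\ 0 < mi /\ 0 < mj /\ 0 < mk.

Lemma setting_rot Z Li Lj Lk r mi mj mk : setting Z Li Lj Lk r mi mj mk -> setting Z Lj Lk Li r mj mk mi.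
Proof. unfold setting; tauto. Qed.

Ltac rwmH H := repeat match goal with E : mink ?a ?b = _ |- _ =>
   match type of H with context [mink a b] => rewrite E in H end end.

Ltac dset S :=
  let HZ := fresh "HZ" in let HLi := fresh "HLi" in let HLj := fresh "HLj" in let HLk := fresh "HLk" in
  destruct S as (HZ & HLi & HLj & HLk & ?Hr & ?Zi & ?Zj & ?Zk & ?jk & ?ki & ?ij & ?Hmi & ?Hmj & ?Hmk);
  pose proof HZ as [?ZZ ?HZ0]; pose proof HLi as [?ii ?HLi0]; pose proof HLj as [?jj ?HLj0]; pose proof HLk as [?kk ?HLk0];
  repeat match goal with
  | E : mink ?a ?b = ?v |- _ =>
     match goal with
     | _ : mink b a = _ |- _ => fail 1
     | _ => assert (mink b a = v) by (rewrite mink_sym; exact E)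
     end
  end.

Lemma set_D2 Z Li Lj Lk r mi mj mk : setting Z Li Lj Lk r mi mj mk ->
  det3 Lj Lk Li ^ 2 = 2 * mi * mj * mk.
Proof.
  intro S. dset S.
  pose proof (gram3 Lj Lk Li Lj Lk Li) as G. rwmH G.
  replace (det3 Lj Lk Li ^ 2) with (det3 Lj Lk Li * det3 Lj Lk Li) by ring. rewrite G. ring.
Qed.

Lemma set_AD Z Li Lj Lk r mi mj mk : setting Z Li Lj Lk r mi mj mk ->
  det3 Lj Lk Z * det3 Lj Lk Li = r * mi * (mj + mk - mi).
Proof.
  intro S. dset S.
  pose proof (gram3 Lj Lk Z Lj Lk Li) as G. rwmH G. rewrite G. ring.
Qed.

Lemma set_A2 Z Li Lj Lk r mi mj mk : setting Z Li Lj Lk r mi mj mk ->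
  det3 Lj Lk Z ^ 2 = 2 * mi * r^2 - mi^2.
Proof.
  intro S. dset S.
  pose proof (gram3 Lj Lk Z Lj Lk Z) as G. rwmH G.
  replace (det3 Lj Lk Z ^ 2) with (det3 Lj Lk Z * det3 Lj Lk Z) by ring. rewrite G. ring.
Qed.

Lemma set_Hrel Z Li Lj Lk r mi mj mk : setting Z Li Lj Lk r mi mj mk ->
  r^2 * (2*(mi*mj+mj*mk+mk*mi) - (mi^2+mj^2+mk^2)) = 2*mi*mj*mk.
Proof.
  intro S. pose proof (set_D2 _ _ _ _ _ _ _ _ S) as D2.
  pose proof (set_AD _ _ _ _ _ _ _ _ S) as AD1.
  pose proof (set_AD _ _ _ _ _ _ _ _ (setting_rot _ _ _ _ _ _ _ _ S)) as AD2.
  pose proof (set_AD _ _ _ _ _ _ _ _ (setting_rot _ _ _ _ _ _ _ _ (setting_rot _ _ _ _ _ _ _ _ S))) as AD3.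
  dset S.
  pose proof (f_equal (fun X => mink X Z) (cramer Lj Lk Li Z)) as C. simpl in C.
  rewrite mink_scale_l, !mink_add_l, !mink_scale_l in C. rwmH C.
  replace (det3 Lk Li Lj) with (det3 Lj Lk Li) in AD2 by (unfold det3; ring).
  replace (det3 Li Lj Lk) with (det3 Lj Lk Li) in AD3 by (unfold det3; ring).
  replace (det3 Lk Li Z) with (det3 Z Lk Li) in AD2 by (unfold det3; ring).
  replace (det3 Li Lj Z) with (det3 Lj Z Li) in AD3 by (unfold det3; ring).
  assert (E : det3 Lj Lk Li * det3 Lj Lk Li = r * (det3 Z Lk Li * det3 Lj Lk Li + det3 Lj Z Li * det3 Lj Lk Li + det3 Lj Lk Z * det3 Lj Lk Li)).
  { apply Rmult_eq_reg_l with (-1); [|lra]. 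
    replace (-1 * (det3 Lj Lk Li * det3 Lj Lk Li)) with (det3 Lj Lk Li * -1 * det3 Lj Lk Li) by ring.
    rewrite C. ring. }
  rewrite AD1, AD2, AD3 in E.
  replace (det3 Lj Lk Li * det3 Lj Lk Li) with (det3 Lj Lk Li ^ 2) in E by ring.
  rewrite D2 in E. rewrite E. ring.
Qed.

Definition hv e Z Lj Lk := vscale (e / sqrt (2 * - mink Lj Lk)) (mcross Z (vsub Lk Lj)).

Lemma mink_mcross a b c : mink (mcross a b) c = det3 a b c.
Proof. rewrite det3_mcross; reflexivity. Qed.

Lemma W_props Z Li Lj Lk r mi mj mk : setting Z Li Lj Lk r mi mj mk ->
  let W := mcross Z (vsub Lk Lj) in
  mink W Z = 0 /\ mink W W = 2 * mi /\ mink W Lj = mink W Lk /\ det3 Lj Lk W = 2 * r * mi.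
Proof.
  intros S W. dset S. unfold W. split; [|split; [|split]].
  - rewrite mink_mcross. unfold det3, vsub, vadd, vscale; simpl; ring.
  - rewrite binet. rewrite !mink_vsub_l, !mink_vsub_r. rwm. ring.
  - rewrite !mink_mcross. unfold det3, vsub, vadd, vscale; simpl; ring.
  - rewrite det3_mcross, binet. rewrite !mink_vsub_r. rwm. ring.
Qed.

Lemma sqrt2m_pos m : 0 < m -> 0 < sqrt (2*m).
Proof. intro; apply sqrt_lt_R0; lra. Qed.
Lemma sqrt2m_sq m : 0 < m -> sqrt (2*m) * sqrt (2*m) = 2*m.
Proof. intro; apply sqrt_sqrt; lra. Qed.

Lemma hv_props Z Li Lj Lk r mi mj mk e : setting Z Li Lj Lk r mi mj mk -> e * e = 1 ->
  let v := hv e Z Lj Lk in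
  mink v Z = 0 /\ mink v v = 1 /\ mink v Lj = mink v Lk /\ det3 Lj Lk v = e * r * sqrt (2*mi).
Proof.
  intros S He v. pose proof (W_props _ _ _ _ _ _ _ _ S) as (W1 & W2 & W3 & W4).
  assert (jk : mink Lj Lk = - mi) by (destruct S as (_&_&_&_&_&_&_&_&?&_); auto).
  assert (Hmi : 0 < mi) by (destruct S as (_&_&_&_&_&_&_&_&_&_&_&?&_); auto).
  pose proof (sqrt2m_pos _ Hmi) as Sp. pose proof (sqrt2m_sq _ Hmi) as Ss.
  unfold v, hv. rewrite jk, Ropp_involutive.
  rewrite !mink_scale_l, !mink_scale_r, det3_scale3, W1, W2, W4.
  split; [ring|split; [|split]].
  - set (s := sqrt (2*mi)) in *. rewrite <- Ss. field_simplify; [|lra]. lra.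
  - rewrite W3; reflexivity.
  - set (s := sqrt (2*mi)) in *. replace (2*r*mi) with (r*(2*mi)) by ring. rewrite <- Ss. field; lra.
Qed.

Lemma georay_hpoint Z v t : hpoint Z -> mink v Z = 0 -> mink v v = 1 -> hpoint (georay Z v t).
Proof.
  intros HZ V1 V2. pose proof HZ as [ZZ _].
  assert (Hs : mink (georay Z v t) (georay Z v t) = -1).
  { rewrite georay_self, ZZ, (mink_sym Z v), V1, V2. pose proof (cosh_sinh t). lra. }
  split; auto. apply hp_c0 with Z; auto.
  rewrite mink_georay, ZZ, V1. pose proof (cosh_pos t). lra.
Qed.

Lemma hray_exists Z Li Lj Lk r mi mj mk e : setting Z Li Lj Lk r mi mj mk -> e * e = 1 ->
  e * det3 Lj Lk Li < 0 -> hray Z Li Lj Lk (hv e Z Lj Lk).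
Proof.
  intros S He HD.
  pose proof (hv_props _ _ _ _ _ _ _ _ e S He) as (V1 & V2 & V3 & V4).
  pose proof (set_A2 _ _ _ _ _ _ _ _ S) as A2.
  set (v := hv e Z Lj Lk) in *.
  dset S.
  split; [split; auto|split].
  - intros t _. split; [apply georay_hpoint; auto|].
    unfold hsd. rewrite !mink_georay, Zj, Zk, V3. reflexivity.
  - pose proof (sqrt2m_pos _ Hmi) as Sp. pose proof (sqrt2m_sq _ Hmi) as Ss.
    set (s := sqrt (2*mi)) in *.
    destruct (ev_pos (e * det3 Lj Lk Z) (r * s)) as [T HT].
    + replace ((e * det3 Lj Lk Z)^2) with ((e*e) * det3 Lj Lk Z ^2) by ring.
      rewrite He, A2. replace ((r*s)^2) with (r^2 * (s*s)) by ring. rewrite Ss. nra.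
    + nra.
    + exists T. intros t Ht. specialize (HT t Ht). unfold beyond_side.
      rewrite det3_georay, V4.
      set (x := cosh t * det3 Lj Lk Z + sinh t * (e * r * s)).
      assert (Ex : e * x = cosh t * (e * det3 Lj Lk Z) + sinh t * (r * s)).
      { unfold x. replace (sinh t * (r*s)) with (sinh t * ((e*e) * r * s)) by (rewrite He; ring). ring. }
      assert (P : x * det3 Lj Lk Li = (e * x) * (e * det3 Lj Lk Li)).
      { replace ((e * x) * (e * det3 Lj Lk Li)) with ((e*e) * (x * det3 Lj Lk Li)) by ring. rewrite He; ring. }
      rewrite P. rewrite Ex. nra.
Qed.

Lemma vec_solve k v a b c w : vscale k v = vadd (vadd (vscale 0 a) (vscale 0 b)) (vscale c w) -> k <> 0 ->
  v = vscale (c / k) w.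
Proof.
  destruct v, a, b, w; unfold vscale, vadd; simpl. intros H Hk. injection H; intros.
  f_equal; apply Rmult_eq_reg_l with k; auto; field_simplify; auto; lra.
Qed.

Lemma hray_bis Z Li Lj Lk r mi mj mk v : setting Z Li Lj Lk r mi mj mk -> hray Z Li Lj Lk v ->
  mink v Lj = mink v Lk.
Proof.
  intros S [[U1 U2] [Hb _]]. dset S.
  destruct (Hb 1 ltac:(lra)) as [HX Hh]. unfold hsd in Hh.
  apply ln_inv in Hh; [| pose proof (tpos _ _ HX HLj); lra | pose proof (tpos _ _ HX HLk); lra].
  rewrite !mink_georay, Zj, Zk in Hh. pose proof sinh_1_pos.
  apply Rmult_eq_reg_l with (sinh 1); lra.
Qed.

Lemma hray_form Z Li Lj Lk r mi mj mk v : setting Z Li Lj Lk r mi mj mk -> hray Z Li Lj Lk v ->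
  exists e, e * e = 1 /\ v = hv e Z Lj Lk.
Proof.
  intros S H. pose proof (hray_bis _ _ _ _ _ _ _ _ _ S H) as Vb.
  destruct H as [[U1 U2] _].
  pose proof (W_props _ _ _ _ _ _ _ _ S) as (W1 & W2 & W3 & W4).
  dset S.
  set (d := vsub Lk Lj) in *. set (W := mcross Z d) in *.
  pose proof (cramer Z d W v) as C.
  assert (E1 : det3 Z d W = 2 * mi) by (rewrite det3_mcross; exact W2).
  assert (Vd : mink v d = 0) by (unfold d; rewrite mink_vsub_r; lra).
  assert (Zd : mink Z d = 0) by (unfold d; rewrite mink_vsub_r; rwm; ring).
  assert (E2 : det3 v d W = 0).
  { rewrite det3_mcross. unfold W. rewrite binet, (mink_sym d Z), U1, Vd, Zd. ring. }
  assert (E3 : det3 Z v W = 0).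
  { rewrite det3_mcross. unfold W. rewrite binet, U1, Vd, Zd. ring. }
  rewrite E1, E2, E3 in C.
  apply vec_solve in C; [|lra].
  set (c := det3 Z d v) in *.
  pose proof (sqrt2m_pos _ Hmi) as Sp. pose proof (sqrt2m_sq _ Hmi) as Ss.
  assert (Hc : c * c = 2 * mi).
  { rewrite C in U2. rewrite mink_scale_l, mink_scale_r, W2 in U2.
    assert (T : c * c = 2*mi * (c/(2*mi) * (c/(2*mi)*(2*mi)))) by (field; lra).
    rewrite T, U2. ring. }
  exists (c / sqrt (2*mi)). split.
  - set (s := sqrt (2*mi)) in *. replace (c / s * (c / s)) with ((c*c)/(s*s)) by (field; lra). rewrite Hc, Ss. field; lra.
  - rewrite C. unfold hv. rewrite jk, Ropp_involutive. fold d. fold W. f_equal.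
    set (s := sqrt (2*mi)) in *. rewrite <- Ss. field. lra.
Qed.

Lemma hray_sign Z Li Lj Lk r mi mj mk e : setting Z Li Lj Lk r mi mj mk -> e * e = 1 ->
  hray Z Li Lj Lk (hv e Z Lj Lk) -> e * det3 Lj Lk Li < 0.
Proof.
  intros S He [_ [_ [T2 HT2]]].
  pose proof (hv_props _ _ _ _ _ _ _ _ e S He) as (V1 & V2 & V3 & V4).
  pose proof (set_A2 _ _ _ _ _ _ _ _ S) as A2.
  pose proof (set_D2 _ _ _ _ _ _ _ _ S) as D2.
  set (v := hv e Z Lj Lk) in *.
  dset S.
  pose proof (sqrt2m_pos _ Hmi) as Sp. pose proof (sqrt2m_sq _ Hmi) as Ss.
  set (s := sqrt (2*mi)) in *.
  destruct (ev_pos (e * det3 Lj Lk Z) (r * s)) as [T HT].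
  + replace ((e * det3 Lj Lk Z)^2) with ((e*e) * det3 Lj Lk Z ^2) by ring.
    rewrite He, A2. replace ((r*s)^2) with (r^2 * (s*s)) by ring. rewrite Ss. nra.
  + nra.
  + set (D := det3 Lj Lk Li) in *.
    assert (HD : 0 < (e*D)^2).
    { replace ((e*D)^2) with ((e*e)*D^2) by ring. rewrite He, D2.
      assert (0 < mi*mj) by nra. nra. }
    destruct (Rlt_or_le (e*D) 0) as [h|h]; auto. exfalso.
    assert (h' : 0 < e * D) by (destruct h as [h|h]; auto; rewrite <- h in HD; lra).
    set (t := Rmax T T2).
    specialize (HT t (Rmax_l _ _)). specialize (HT2 t (Rmax_r _ _)).
    unfold beyond_side in HT2. rewrite det3_georay, V4 in HT2. fold D in HT2.
    set (x := cosh t * det3 Lj Lk Z + sinh t * (e * r * s)) in *.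
    assert (Ex : e * x = cosh t * (e * det3 Lj Lk Z) + sinh t * (r * s)).
    { unfold x. replace (sinh t * (r*s)) with (sinh t * ((e*e) * r * s)) by (rewrite He; ring). ring. }
    assert (P : x * D = (e * x) * (e * D)).
    { replace ((e * x) * (e * D)) with ((e*e) * (x * D)) by ring. rewrite He; ring. }
    rewrite P, Ex in HT2. nra.
Qed.

Lemma art_pos x y : 0 <= x < 1 -> 0 < y -> y*y*(1 - x*x) = 1 -> arcosh y = artanh x.
Proof.
  intros Hx Hy E. unfold arcosh, artanh.
  assert (E1 : y*y - 1 = (x*y)*(x*y)) by nra.
  rewrite E1, sqrt_square by nra.
  assert (Hw : 0 < y + x*y) by nra.
  assert (E2 : (1 + x)/(1 - x) = (y + x*y) * (y + x*y)).
  { apply Rmult_eq_reg_r with (1 - x*x); [|nra].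
    replace ((y + x * y) * (y + x * y) * (1 - x * x)) with ((1+x)*(1+x)*(y*y*(1-x*x))) by ring.
    rewrite E. field. lra. }
  rewrite E2, ln_mult by lra. field.
Qed.

Lemma artanh_opp x : -1 < x < 1 -> artanh (- x) = - artanh x.
Proof.
  intro Hx. unfold artanh.
  replace ((1 + - x) / (1 - - x)) with (/ ((1 + x)/(1 - x))) by (field; lra).
  rewrite ln_Rinv. field. apply Rdiv_lt_0_compat; lra.
Qed.

Lemma Xf_sqrt a b c : 0 < a -> 0 < b -> 0 < c ->
  Xf (sqrt a) (sqrt b) (sqrt c) = (b + c - a) / (2 * sqrt b * sqrt c).
Proof. intros. unfold Xf. rewrite !sqrt_sqrt by lra. reflexivity. Qed.

Lemma Xf_sqrt_sq a b c : 0 < a -> 0 < b -> 0 < c ->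
  Xf (sqrt a) (sqrt b) (sqrt c) * Xf (sqrt a) (sqrt b) (sqrt c) = (b + c - a)^2 / (4 * b * c).
Proof.
  intros. rewrite Xf_sqrt by auto.
  pose proof (sqrt_lt_R0 b H0). pose proof (sqrt_lt_R0 c H1).
  replace (4*b*c) with (4 * (sqrt b * sqrt b) * (sqrt c * sqrt c)) by (rewrite !sqrt_sqrt by lra; ring).
  field. lra.
Qed.

Lemma bis_val Z Li Lj Lk r mi mj mk s : setting Z Li Lj Lk r mi mj mk -> bis_len Z Li Lj Lk s ->
  s = artanh (Xf (sqrt mi) (sqrt mj) (sqrt mk)).
Proof.
  intros S [F [[HF [a [b [Ha [Hb EF]]]]] [[_ Hh] Es]]].
  pose proof (set_AD _ _ _ _ _ _ _ _ S) as AD.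
  pose proof (set_Hrel _ _ _ _ _ _ _ _ S) as Hrel.
  dset S.
  unfold hsd in Hh. apply ln_inv in Hh; [| pose proof (tpos _ _ HF HLj); lra | pose proof (tpos _ _ HF HLk); lra].
  pose proof HF as [FF _].
  subst F. rewrite !mink_comb_l in Hh. rwmH Hh.
  assert (Eab : b = a) by nra. subst b.
  rewrite !mink_comb_l, !mink_comb_r in FF. rwmH FF.
  assert (Ha2 : a * a * (2 * mi) = 1) by nra.
  unfold hdist in Es. rewrite mink_comb_r in Es. rwmH Es.
  replace (- (a * - r + a * - r)) with (2*a*r) in Es by ring.
  rewrite AD in Es.
  pose proof (Xf_sqrt_sq mi mj mk Hmi Hmj Hmk) as XX.
  rewrite Xf_sqrt in * by auto.
  pose proof (sqrt_lt_R0 mj Hmj). pose proof (sqrt_lt_R0 mk Hmk).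
  set (X := (mj + mk - mi) / (2 * sqrt mj * sqrt mk)) in *.
  assert (E1 : 1 - X*X = mi / (2 * r^2)).
  { rewrite XX. apply Rmult_eq_reg_r with (4*mj*mk*r^2); [| assert (H00: 0 < mj*mk*r^2) by (apply Rmult_lt_0_compat; [nra| apply pow_lt; lra]); nra].
    field_simplify; try lra. }
  assert (Hy : (2*a*r)*(2*a*r)*(1 - X*X) = 1).
  { rewrite E1. replace ((2*a*r)*(2*a*r)*(mi/(2*r^2))) with (a*a*(2*mi)) by (field; lra). exact Ha2. }
  assert (HXb : X*X < 1).
  { assert (0 < mi / (2*r^2)) by (apply Rdiv_lt_0_compat; nra). lra. }
  assert (Hy0 : 0 < 2*a*r) by nra.
  destruct (Rlt_dec (r * mi * (mj + mk - mi)) 0) as [h|h].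
  - assert (HX : X < 0).
    { assert (Hden: 0 < / (2*sqrt mj*sqrt mk)) by (apply Rinv_0_lt_compat; nra).
      assert (0 < r*mi) by nra.
      assert (Hq: mj + mk - mi < 0) by nra. unfold X, Rdiv; nra. }
    rewrite Es. replace (artanh X) with (artanh (- - X)) by (rewrite Ropp_involutive; auto). rewrite artanh_opp by nra.
    f_equal. apply art_pos; [nra|lra|]. replace (- X * - X) with (X*X) by ring. exact Hy.
  - assert (HX : 0 <= X).
    { assert (Hden: 0 < / (2*sqrt mj*sqrt mk)) by (apply Rinv_0_lt_compat; nra).
      assert (0 < r*mi) by nra.
      assert (Hq: 0 <= mj + mk - mi) by nra. unfold X, Rdiv; nra. }
    rewrite Es. apply art_pos; [nra|lra|exact Hy].
Qed.

Lemma bis_exists Z Li Lj Lk r mi mj mk : setting Z Li Lj Lk r mi mj mk -> exists s, bis_len Z Li Lj Lk s.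
Proof.
  intros S. dset S.
  pose proof (sqrt2m_pos _ Hmi) as Sp. pose proof (sqrt2m_sq _ Hmi) as Ss.
  set (a := / sqrt (2*mi)).
  assert (Ha : 0 < a) by (apply Rinv_0_lt_compat; auto).
  assert (Ha2 : a * a * (2*mi) = 1) by (unfold a; set (s := sqrt (2*mi)) in *; rewrite <- Ss; field; lra).
  set (F := vadd (vscale a Lj) (vscale a Lk)).
  assert (HF : hpoint F).
  { split.
    - unfold F. rewrite !mink_comb_l, !mink_comb_r. rwm. nra.
    - unfold F, vadd, vscale; simpl. nra. }
  eexists. exists F. split; [split; auto; exists a, a; auto|]. split; [|reflexivity].
  split; auto. unfold hsd, F. rewrite !mink_comb_l. rwm. f_equal. ring.
Qed.

Lemma sqrt2m_split m : 0 < m -> sqrt (2*m) = sqrt 2 * sqrt m.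
Proof. intro; apply sqrt_mult; lra. Qed.

Lemma hv_dot Z Li Lj Lk r mi mj mk e : setting Z Li Lj Lk r mi mj mk -> e * e = 1 ->
  mink (hv e Z Lk Li) (hv e Z Li Lj) = - Xf (sqrt mi) (sqrt mj) (sqrt mk).
Proof.
  intros S He. dset S. unfold hv. rwm. rewrite !Ropp_involutive.
  rewrite mink_scale_l, mink_scale_r, binet, !mink_vsub_l, !mink_vsub_r. rwm.
  rewrite Xf_sqrt by auto.
  rewrite !sqrt2m_split by auto.
  pose proof (sqrt_lt_R0 2 ltac:(lra)). pose proof (sqrt_lt_R0 mj Hmj). pose proof (sqrt_lt_R0 mk Hmk).
  pose proof (sqrt_sqrt 2 ltac:(lra)) as S22.
  set (s2 := sqrt 2) in *. set (sj := sqrt mj) in *. set (sk := sqrt mk) in *.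
  assert (Hp : 0 < s2*s2*sj*sk) by (repeat apply Rmult_lt_0_compat; lra).
  apply Rmult_eq_reg_r with (s2*s2*sj*sk); [|lra].
  field_simplify; try lra. replace (e^2) with (e*e) by ring. replace (s2^2) with (s2*s2) by ring. rewrite He, S22. field.
Qed.

Lemma det3_scale2 a b c x : det3 a (vscale c x) b = c * det3 a x b.
Proof. unfold det3, vscale; simpl; ring. Qed.

Lemma hv_cross Z Li Lj Lk r mi mj mk e : setting Z Li Lj Lk r mi mj mk -> e * e = 1 ->
  det3 Z (hv e Z Lk Li) (hv e Z Lj Lk) * det3 Z (hv e Z Lk Li) (hv e Z Li Lj) < 0.
Proof.
  intros S He.
  pose proof (set_Hrel _ _ _ _ _ _ _ _ S) as Hrel.
  dset S.
  set (Wi := mcross Z (vsub Lk Lj)). set (Wj := mcross Z (vsub Li Lk)). set (Wk := mcross Z (vsub Lj Li)).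
  assert (Rid : det3 Z Wj Wi = - det3 Z Wj Wk).
  { unfold Wi, Wj, Wk. destruct Z, Li, Lj, Lk. unfold det3, mcross, vsub, vadd, vscale; simpl. ring. }
  assert (WZ : forall d, mink (mcross Z d) Z = 0) by (intro d; rewrite mink_mcross; unfold det3; ring).
  assert (ZW : forall d, mink Z (mcross Z d) = 0) by (intro d; rewrite mink_sym; apply WZ).
  assert (Sq : det3 Z Wj Wk * det3 Z Wj Wk = 4*mj*mk - (mi - mj - mk)^2).
  { rewrite gram3. unfold Wj, Wk. rewrite !WZ, !ZW, !binet, !mink_vsub_l, !mink_vsub_r. rwm. ring. }
  assert (Hq : 0 < det3 Z Wj Wk * det3 Z Wj Wk).
  { rewrite Sq. assert (0 < r^2) by (apply pow_lt; lra).
    assert (0 < 2*mi*mj*mk) by (assert (0 < mi*mj) by nra; nra).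
    assert (E : 4*mj*mk - (mi - mj - mk)^2 = 2*(mi*mj+mj*mk+mk*mi) - (mi^2+mj^2+mk^2)) by ring.
    rewrite E. nra. }
  unfold hv. rwm. rewrite !Ropp_involutive.
  rewrite !det3_scale2, !det3_scale3. fold Wi Wj Wk.
  rewrite Rid.
  pose proof (sqrt2m_pos _ Hmi). pose proof (sqrt2m_pos _ Hmj). pose proof (sqrt2m_pos _ Hmk).
  set (si := sqrt (2*mi)) in *. set (sj := sqrt (2*mj)) in *. set (sk := sqrt (2*mk)) in *.
  set (Q := det3 Z Wj Wk) in *.
  replace (e / sj * (e / si * - Q) * (e / sj * (e / sk * Q))) with (- ((e*e)*(e*e) / (sj*sj*si*sk)) * (Q*Q)) by (field; lra).
  rewrite He. assert (0 < 1 * 1 / (sj*sj*si*sk)) by (apply Rdiv_lt_0_compat; [lra| repeat apply Rmult_lt_0_compat; lra]).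
  nra.
Qed.

Lemma sector_val cji cjk dji d : cji * cjk < 0 -> cjk^2 + d^2 = 1 ->
  (if Rlt_dec (if Rle_dec 0 cji then acos dji else 2*PI - acos dji)
              (if Rle_dec 0 cjk then acos d else 2*PI - acos d)
   then 2*PI - (if Rle_dec 0 cjk then acos d else 2*PI - acos d)
   else (if Rle_dec 0 cjk then acos d else 2*PI - acos d)) = acos d.
Proof.
  intros Hc Hn.
  assert (Hd : -1 < d < 1).
  { assert (0 < cjk^2) by (destruct (Rlt_or_le 0 cjk); nra). nra. }
  pose proof (acos_bound_lt d Hd) as B. pose proof (acos_bound dji) as B2.
  pose proof PI_RGT_0.
  destruct (Rle_dec 0 cjk) as [h|h].
  - assert (cji < 0) by (destruct h as [h|h]; [nra| rewrite <- h in Hc; lra]).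
    destruct (Rle_dec 0 cji); [lra|].
    destruct (Rlt_dec (2 * PI - acos dji) (acos d)); [lra|reflexivity].
  - assert (0 < cji) by nra.
    destruct (Rle_dec 0 cji); [|lra].
    destruct (Rlt_dec (acos dji) (2 * PI - acos d)); [ring|lra].
Qed.

Lemma tangent_lagrange Z v w : hpoint Z -> mink v Z = 0 -> mink w Z = 0 -> mink v v = 1 -> mink w w = 1 ->
  det3 Z v w ^2 + mink v w ^2 = 1.
Proof.
  intros [ZZ _] H1 H2 H3 H4.
  replace (det3 Z v w ^2) with (det3 Z v w * det3 Z v w) by ring.
  rewrite gram3. rewrite (mink_sym Z v), (mink_sym Z w), (mink_sym w v). rewrite ZZ, H1, H2, H3, H4. ring.
Qed.

Lemma hsector_val Z Li Lj Lk r mi mj mk e : setting Z Li Lj Lk r mi mj mk -> e * e = 1 ->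
  hsector Z (hv e Z Lj Lk) (hv e Z Lk Li) (hv e Z Li Lj) = PI - acos (Xf (sqrt mi) (sqrt mj) (sqrt mk)).
Proof.
  intros S He.
  pose proof (setting_rot _ _ _ _ _ _ _ _ S) as S2.
  pose proof (setting_rot _ _ _ _ _ _ _ _ S2) as S3.
  pose proof (hv_props _ _ _ _ _ _ _ _ e S2 He) as (A1 & A2 & _).
  pose proof (hv_props _ _ _ _ _ _ _ _ e S3 He) as (B1 & B2 & _).
  pose proof (hv_dot _ _ _ _ _ _ _ _ e S He) as Dt.
  pose proof (hv_cross _ _ _ _ _ _ _ _ e S He) as Cr.
  assert (HZ : hpoint Z) by (destruct S; auto).
  pose proof (tangent_lagrange Z _ _ HZ A1 B1 A2 B2) as TL.
  unfold hsector, hccw. rewrite sector_val; auto.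
  rewrite Dt, acos_opp. reflexivity.
Qed.

Definition rot (p : pt2) : pt2 := (- snd p, fst p).
Definition ev t (Pj Pk : pt2) := pscale (t / edist Pj Pk) (rot (psub Pk Pj)).

Definition esetting (O Pi Pj Pk : pt2) li lj lk :=
  eucl_triangle Pi Pj Pk li lj lk /\ circumcenter O Pi Pj Pk /\ tri_ineq li lj lk.

Lemma esetting_rot O Pi Pj Pk li lj lk : esetting O Pi Pj Pk li lj lk -> esetting O Pj Pk Pi lj lk li.
Proof. unfold esetting, eucl_triangle, circumcenter, tri_ineq. intros (?&?&?). lra. Qed.

Lemma edot_self_nonneg p : 0 <= edot p p.
Proof. unfold edot. nra. Qed.

Lemma edist_sq p q l : edist p q = l -> edot (psub p q) (psub p q) = l * l.
Proof. unfold edist. intro H. rewrite <- H. rewrite sqrt_sqrt; auto. apply edot_self_nonneg. Qed.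

Lemma edist_eq_sq p q p' q' : edist p q = edist p' q' -> edot (psub p q) (psub p q) = edot (psub p' q') (psub p' q').
Proof. unfold edist. intro H. apply sqrt_inj; auto; apply edot_self_nonneg. Qed.

Lemma edist_sym p q : edist p q = edist q p.
Proof. unfold edist, edot, psub; simpl. f_equal. ring. Qed.

Ltac pt_destr := repeat match goal with p : pt2 |- _ => destruct p end.

Lemma es_facts O Pi Pj Pk li lj lk : esetting O Pi Pj Pk li lj lk ->
  edot (psub Pj Pk) (psub Pj Pk) = li*li /\ edot (psub Pk Pi) (psub Pk Pi) = lj*lj /\
  edot (psub Pi Pj) (psub Pi Pj) = lk*lk /\
  edot (psub O Pi) (psub O Pi) = edot (psub O Pj) (psub O Pj) /\
  edot (psub O Pj) (psub O Pj) = edot (psub O Pk) (psub O Pk).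
Proof.
  intros ((E1&E2&E3)&(C1&C2)&_).
  repeat split; try (apply edist_sq; auto); apply edist_eq_sq; auto.
Qed.

Lemma es_E2 O Pi Pj Pk li lj lk : esetting O Pi Pj Pk li lj lk ->
  4 * (orient Pj Pk Pi)^2 = Hf li lj lk.
Proof.
  intros S. pose proof (es_facts _ _ _ _ _ _ _ S) as (F1&F2&F3&_).
  assert (Hl : forall x y : R, x*x = y*y -> x^4 = y^4) by (intros x y h; replace (x^4) with ((x*x)*(x*x)) by ring; rewrite h; ring).
  unfold Hf.
  replace ((li + lj + lk) * (- li + lj + lk) * (li - lj + lk) * (li + lj - lk))
    with (2*((li*li)*(lj*lj) + (lj*lj)*(lk*lk) + (lk*lk)*(li*li)) - ((li*li)*(li*li) + (lj*lj)*(lj*lj) + (lk*lk)*(lk*lk))) by ring.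
  rewrite <- F1, <- F2, <- F3. pt_destr. unfold orient, ecross, edot, psub; simpl. ring.
Qed.

Lemma edist_val Pj Pk li lj lk O Pi : esetting O Pi Pj Pk li lj lk -> edist Pj Pk = li.
Proof. intros ((E1&_)&_). exact E1. Qed.

Lemma li_pos O Pi Pj Pk li lj lk : esetting O Pi Pj Pk li lj lk -> 0 < li /\ 0 < lj /\ 0 < lk.
Proof. intros (_&_&T). unfold tri_ineq in T. lra. Qed.

Lemma edot_scale_l a p q : edot (pscale a p) q = a * edot p q.
Proof. unfold edot, pscale; simpl; ring. Qed.
Lemma edot_scale_r a p q : edot p (pscale a q) = a * edot p q.
Proof. unfold edot, pscale; simpl; ring. Qed.
Lemma ecross_scale_l a p q : ecross (pscale a p) q = a * ecross p q.
Proof. unfold ecross, pscale; simpl; ring. Qed.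
Lemma ecross_scale_r a p q : ecross p (pscale a q) = a * ecross p q.
Proof. unfold ecross, pscale; simpl; ring. Qed.
Lemma edot_rot p q : edot (rot p) (rot q) = edot p q.
Proof. unfold edot, rot; simpl; ring. Qed.
Lemma ecross_rot p q : ecross (rot p) (rot q) = ecross p q.
Proof. unfold ecross, rot; simpl; ring. Qed.
Lemma edot_rot_self p : edot (rot p) p = 0.
Proof. unfold edot, rot; simpl; ring. Qed.
Lemma ecross_rot_self p : ecross p (rot p) = edot p p.
Proof. unfold ecross, edot, rot; simpl; ring. Qed.
Lemma edot_sym p q : edot p q = edot q p.
Proof. unfold edot; ring. Qed.
Lemma psub_anti p q : edot (psub q p) (psub q p) = edot (psub p q) (psub p q).
Proof. unfold edot, psub; simpl; ring. Qed.

Lemma ev_props O Pi Pj Pk li lj lk t : esetting O Pi Pj Pk li lj lk -> t * t = 1 ->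
  let u := ev t Pj Pk in
  edot u u = 1 /\ edot u (psub Pk Pj) = 0 /\ ecross (psub Pk Pj) u = t * li.
Proof.
  intros S Ht u. pose proof (es_facts _ _ _ _ _ _ _ S) as (F1&_).
  pose proof (li_pos _ _ _ _ _ _ _ S) as (Hi&_).
  rewrite <- psub_anti in F1.
  unfold u, ev. rewrite (edist_val _ _ _ _ _ _ _ S).
  rewrite !edot_scale_l, !edot_scale_r, ecross_scale_r, edot_rot, edot_rot_self, ecross_rot_self, F1.
  split; [|split].
  - field_simplify; [|lra]. replace (t^2) with (t*t) by ring. rewrite Ht. field; lra.
  - ring.
  - field; lra.
Qed.

Lemma ray_sq O u t P : edot (psub (padd O (pscale t u)) P) (psub (padd O (pscale t u)) P) =
  edot (psub O P) (psub O P) + 2 * t * edot u (psub O P) + t * t * edot u u.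
Proof. unfold edot, psub, padd, pscale; simpl; ring. Qed.

Lemma ray_orient Pj Pk O t u : orient Pj Pk (padd O (pscale t u)) = orient Pj Pk O + t * ecross (psub Pk Pj) u.
Proof. unfold orient, ecross, psub, padd, pscale; simpl; ring. Qed.

Lemma edot_diff u O Pj Pk : edot u (psub O Pj) - edot u (psub O Pk) = edot u (psub Pk Pj).
Proof. unfold edot, psub; simpl; ring. Qed.

Lemma eray_exists O Pi Pj Pk li lj lk t : esetting O Pi Pj Pk li lj lk -> t * t = 1 ->
  t * orient Pj Pk Pi < 0 -> eray O Pi Pj Pk (ev t Pj Pk).
Proof.
  intros S Ht HE.
  pose proof (ev_props _ _ _ _ _ _ _ t S Ht) as (U1&U2&U3).
  pose proof (es_facts _ _ _ _ _ _ _ S) as (_&_&_&C1&C2).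
  pose proof (li_pos _ _ _ _ _ _ _ S) as (Hi&_).
  set (u := ev t Pj Pk) in *.
  split; [exact U1|split].
  - intros s _. unfold edist. f_equal. rewrite !ray_sq.
    pose proof (edot_diff u O Pj Pk) as Dd.
    assert (Ex : edot u (psub O Pj) = edot u (psub O Pk)) by lra. rewrite Ex, C2. reflexivity.
  - set (E := orient Pj Pk Pi) in *. set (o := orient Pj Pk O).
    set (k := - (t * E) * li).
    assert (Hk : 0 < k) by (unfold k; apply Rmult_lt_0_compat; lra).
    exists (o * E / k + 1). intros s Hs.
    rewrite ray_orient, U3. fold o. fold E.
    assert (s * k >= o * E + k).
    { apply Rle_ge. apply Rmult_le_reg_r with (/ k). apply Rinv_0_lt_compat; lra.
      replace ((o * E + k) * / k) with (o * E / k + 1) by (field; lra).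
      replace (s * k * / k) with s by (field; lra). lra. }
    unfold k in *. nra.
Qed.

Lemma decomp2 d u : pscale (edot d d) u = padd (pscale (edot d u) d) (pscale (ecross d u) (rot d)).
Proof. destruct d, u; unfold pscale, padd, edot, ecross, rot; simpl; f_equal; ring. Qed.

Lemma pt_solve k u d c w : pscale k u = padd (pscale 0 d) (pscale c w) -> k <> 0 -> u = pscale (c / k) w.
Proof.
  destruct u, d, w; unfold pscale, padd; simpl. intros H Hk. injection H; intros.
  f_equal; apply Rmult_eq_reg_l with k; auto; field_simplify; auto; lra.
Qed.

Lemma eray_perp O Pi Pj Pk li lj lk u : esetting O Pi Pj Pk li lj lk -> eray O Pi Pj Pk u ->
  edot u (psub Pk Pj) = 0.
Proof.
  intros S [U [Hq _]].
  pose proof (es_facts _ _ _ _ _ _ _ S) as (_&_&_&C1&C2).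
  specialize (Hq 1 ltac:(lra)). apply edist_eq_sq in Hq. rewrite !ray_sq, C2 in Hq.
  pose proof (edot_diff u O Pj Pk). lra.
Qed.

Lemma eray_form O Pi Pj Pk li lj lk u : esetting O Pi Pj Pk li lj lk -> eray O Pi Pj Pk u ->
  exists t, t * t = 1 /\ u = ev t Pj Pk.
Proof.
  intros S H. pose proof (eray_perp _ _ _ _ _ _ _ _ S H) as Pp.
  destruct H as [U _].
  pose proof (es_facts _ _ _ _ _ _ _ S) as (F1&_).
  pose proof (li_pos _ _ _ _ _ _ _ S) as (Hi&_).
  rewrite <- psub_anti in F1.
  set (d := psub Pk Pj) in *.
  pose proof (decomp2 d u) as Dc. rewrite F1, (edot_sym d u), Pp in Dc.
  apply pt_solve in Dc; [|nra].
  set (c := ecross d u) in *.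
  assert (Hc : c * c = li * li).
  { rewrite Dc in U. rewrite edot_scale_l, edot_scale_r, edot_rot, F1 in U.
    assert (T : c * c = li*li * (c / (li*li) * (c / (li*li) * (li*li)))) by (field; lra).
    rewrite T, U. ring. }
  exists (c / li). split.
  - replace (c / li * (c / li)) with ((c*c)/(li*li)) by (field; lra). rewrite Hc. field; lra.
  - rewrite Dc. unfold ev. rewrite (edist_val _ _ _ _ _ _ _ S). fold d. f_equal. field; lra.
Qed.

Lemma eray_sign O Pi Pj Pk li lj lk t : esetting O Pi Pj Pk li lj lk -> t * t = 1 ->
  eray O Pi Pj Pk (ev t Pj Pk) -> t * orient Pj Pk Pi < 0.
Proof.
  intros S Ht [_ [_ [T HT]]].
  pose proof (ev_props _ _ _ _ _ _ _ t S Ht) as (U1&U2&U3).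
  pose proof (es_E2 _ _ _ _ _ _ _ S) as E2.
  pose proof (tri_H _ _ _ (proj2 (proj2 S))) as HH.
  pose proof (li_pos _ _ _ _ _ _ _ S) as (Hi&_).
  set (E := orient Pj Pk Pi) in *. set (o := orient Pj Pk O).
  assert (HE : 0 < (t*E)^2) by (replace ((t*E)^2) with ((t*t)*E^2) by ring; rewrite Ht; lra).
  destruct (Rlt_or_le (t*E) 0) as [h|h]; auto. exfalso.
  assert (h' : 0 < t * E) by (destruct h as [h|h]; auto; rewrite <- h in HE; lra).
  set (k := (t * E) * li).
  assert (Hk : 0 < k) by (unfold k; apply Rmult_lt_0_compat; lra).
  set (s := Rmax T (Rabs (o * E) / k + 1)).
  specialize (HT s (Rmax_l _ _)). rewrite ray_orient, U3 in HT. fold o E in HT.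
  assert (Hs : Rabs (o*E) / k + 1 <= s) by apply Rmax_r.
  assert (s * k >= Rabs (o * E) + k).
  { apply Rle_ge. apply Rmult_le_reg_r with (/ k). apply Rinv_0_lt_compat; lra.
    replace ((Rabs (o * E) + k) * / k) with (Rabs (o * E) / k + 1) by (field; lra).
    replace (s * k * / k) with s by (field; lra). lra. }
  pose proof (Rle_abs (- (o*E))). rewrite Rabs_Ropp in *.
  unfold k in *.
  assert ((o + s * (t * li)) * E = o*E + s * (t*E*li)) by ring. nra.
Qed.

Lemma ev_dot O Pi Pj Pk li lj lk t : esetting O Pi Pj Pk li lj lk -> t * t = 1 ->
  edot (ev t Pk Pi) (ev t Pi Pj) = - Xf li lj lk.
Proof.
  intros S Ht.
  pose proof (esetting_rot _ _ _ _ _ _ _ S) as S2. pose proof (esetting_rot _ _ _ _ _ _ _ S2) as S3.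
  pose proof (es_facts _ _ _ _ _ _ _ S) as (F1&F2&F3&_).
  pose proof (li_pos _ _ _ _ _ _ _ S) as (Hi&Hj&Hk).
  unfold ev. rewrite (edist_val _ _ _ _ _ _ _ S2), (edist_val _ _ _ _ _ _ _ S3).
  rewrite edot_scale_l, edot_scale_r, edot_rot.
  assert (Id : 2 * edot (psub Pi Pk) (psub Pj Pi) =
     edot (psub Pj Pk) (psub Pj Pk) - edot (psub Pk Pi) (psub Pk Pi) - edot (psub Pi Pj) (psub Pi Pj))
    by (unfold edot, psub; simpl; ring).
  rewrite F1, F2, F3 in Id.
  unfold Xf.
  replace (t / lj * (t / lk * edot (psub Pi Pk) (psub Pj Pi))) with ((t*t) * (2 * edot (psub Pi Pk) (psub Pj Pi)) / (2*lj*lk)) by (field; lra).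
  rewrite Id, Ht. field. lra.
Qed.

Lemma ev_cross O Pi Pj Pk li lj lk t : esetting O Pi Pj Pk li lj lk -> t * t = 1 ->
  ecross (ev t Pk Pi) (ev t Pj Pk) * ecross (ev t Pk Pi) (ev t Pi Pj) < 0.
Proof.
  intros S Ht.
  pose proof (esetting_rot _ _ _ _ _ _ _ S) as S2. pose proof (esetting_rot _ _ _ _ _ _ _ S2) as S3.
  pose proof (li_pos _ _ _ _ _ _ _ S) as (Hi&Hj&Hk).
  pose proof (es_E2 _ _ _ _ _ _ _ S) as E2.
  pose proof (tri_H _ _ _ (proj2 (proj2 S))) as HH.
  unfold ev. rewrite (edist_val _ _ _ _ _ _ _ S), (edist_val _ _ _ _ _ _ _ S2), (edist_val _ _ _ _ _ _ _ S3).
  rewrite !ecross_scale_l, !ecross_scale_r, !ecross_rot.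
  assert (I1 : ecross (psub Pi Pk) (psub Pk Pj) = - orient Pj Pk Pi) by (unfold orient, ecross, psub; simpl; ring).
  assert (I2 : ecross (psub Pi Pk) (psub Pj Pi) = orient Pj Pk Pi) by (unfold orient, ecross, psub; simpl; ring).
  rewrite I1, I2. set (E := orient Pj Pk Pi) in *.
  replace (t / lj * (t / li * - E) * (t / lj * (t / lk * E))) with (- ((t*t)*(t*t)/(lj*lj*li*lk)) * (E*E)) by (field; lra).
  rewrite Ht.
  assert (0 < 1 * 1 / (lj*lj*li*lk)) by (apply Rdiv_lt_0_compat; [lra| repeat apply Rmult_lt_0_compat; lra]).
  assert (0 < E*E) by nra. nra.
Qed.

Lemma lagrange2 u w : ecross u w ^2 + edot u w ^2 = edot u u * edot w w.
Proof. unfold ecross, edot; ring. Qed.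

Lemma esector_val O Pi Pj Pk li lj lk t : esetting O Pi Pj Pk li lj lk -> t * t = 1 ->
  esector (ev t Pj Pk) (ev t Pk Pi) (ev t Pi Pj) = PI - acos (Xf li lj lk).
Proof.
  intros S Ht.
  pose proof (esetting_rot _ _ _ _ _ _ _ S) as S2. pose proof (esetting_rot _ _ _ _ _ _ _ S2) as S3.
  pose proof (ev_props _ _ _ _ _ _ _ t S2 Ht) as (A1&_).
  pose proof (ev_props _ _ _ _ _ _ _ t S3 Ht) as (B1&_).
  pose proof (ev_dot _ _ _ _ _ _ _ t S Ht) as Dt.
  pose proof (ev_cross _ _ _ _ _ _ _ t S Ht) as Cr.
  pose proof (lagrange2 (ev t Pk Pi) (ev t Pi Pj)) as L. rewrite A1, B1 in L.
  unfold esector, eccw. rewrite sector_val; [|exact Cr|lra].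
  rewrite Dt, acos_opp. reflexivity.
Qed.

Lemma her a b c : 0 < a -> 0 < b -> 0 < c -> 0 < Hf a b c -> tri_ineq a b c.
Proof.
  intros Ha Hb Hc H. unfold Hf in H. unfold tri_ineq.
  assert (P : 0 < a + b + c) by lra.
  assert (H' : 0 < (- a + b + c) * (a - b + c) * (a + b - c)).
  { apply Rmult_lt_reg_l with (a+b+c); auto. rewrite Rmult_0_r. replace ((a + b + c) * ((- a + b + c) * (a - b + c) * (a + b - c))) with ((a + b + c) * (- a + b + c) * (a - b + c) * (a + b - c)) by ring. auto. }
  repeat split; auto.
  - destruct (Rlt_or_le a (b+c)) as [h|h]; auto. exfalso.
    assert (0 < a - b + c) by lra. assert (0 < a + b - c) by lra.
    assert (0 < (a - b + c) * (a + b - c)) by nra. nra.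
  - destruct (Rlt_or_le b (c+a)) as [h|h]; auto. exfalso.
    assert (0 < - a + b + c) by lra. assert (0 < a + b - c) by lra.
    assert (0 < (-a + b + c) * (a + b - c)) by nra. nra.
  - destruct (Rlt_or_le c (a+b)) as [h|h]; auto. exfalso.
    assert (0 < - a + b + c) by lra. assert (0 < a - b + c) by lra.
    assert (0 < (-a + b + c) * (a - b + c)) by nra. nra.
Qed.

Lemma tri_coords a b c : tri_ineq a b c ->
  exists p q, 0 < q /\ p = (b*b + c*c - a*a)/(2*c) /\ q*q = b*b - p*p.
Proof.
  intro T. pose proof (tri_H _ _ _ T) as HH. destruct T as (Ha&Hb&Hc&_).
  set (p := (b*b + c*c - a*a)/(2*c)).
  assert (E : b*b - p*p = Hf a b c / (4*c*c)) by (unfold p, Hf; field; lra).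
  assert (P : 0 < b*b - p*p) by (rewrite E; apply Rdiv_lt_0_compat; nra).
  exists p, (sqrt (b*b - p*p)). split; [apply sqrt_lt_R0; auto|split; auto].
  apply sqrt_sqrt; lra.
Qed.

Lemma sqrt_eq_sq x y : 0 <= y -> x = y * y -> sqrt x = y.
Proof. intros Hy ->. apply sqrt_square; auto. Qed.

Lemma eucl_exists a b c : tri_ineq a b c -> exists P1 P2 P3 : pt2, eucl_triangle P1 P2 P3 a b c.
Proof.
  intro T. destruct (tri_coords _ _ _ T) as (p&q&Hq&Ep&Eq).
  destruct T as (Ha&Hb&Hc&_).
  assert (2*c*p = b*b + c*c - a*a) by (rewrite Ep; field; lra).
  exists (0,0), (c,0), (p,q). unfold eucl_triangle, edist, edot, psub; simpl.
  split; [|split]; apply sqrt_eq_sq; try lra; nra.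
Qed.

Lemma distinct_of L M : lightlike L -> mink L M <> 0 -> distinct_ideal L M.
Proof.
  intros [HL _] Hm [k [_ ->]]. apply Hm. rewrite mink_scale_r, HL. ring.
Qed.

Lemma hyper_exists a b c : tri_ineq a b c -> exists L1 L2 L3 Z,
  dec_triangle L1 L2 L3 /\ equidistant Z L1 L2 L3 /\
  mink L2 L3 = - (a*a) /\ mink L3 L1 = - (b*b) /\ mink L1 L2 = - (c*c).
Proof.
  intro T. destruct (tri_coords _ _ _ T) as (p&q&Hq&Ep&Eq).
  destruct T as (Ha&Hb&Hc&_).
  assert (Ep' : 2*c*p = b*b + c*c - a*a) by (rewrite Ep; field; lra).
  set (oy := (b*b - c*p)/(2*q)).
  assert (Eoy : 2*q*oy = b*b - c*p) by (unfold oy; field; lra).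
  set (R := sqrt (c*c/4 + oy*oy)).
  assert (HR2 : R*R = c*c/4 + oy*oy) by (apply sqrt_sqrt; nra).
  assert (HR : 0 < R) by (apply sqrt_lt_R0; nra).
  set (s := sqrt 2). assert (Hs2 : s*s = 2) by (apply sqrt_sqrt; lra).
  assert (Hs : 0 < s) by (apply sqrt_lt_R0; lra).
  set (L1 := mkV3 (s*R) (s*(-c/2)) (s*(-oy))).
  set (L2 := mkV3 (s*R) (s*(c/2)) (s*(-oy))).
  set (L3 := mkV3 (s*R) (s*(p - c/2)) (s*(q - oy))).
  set (Z := mkV3 1 0 0).
  assert (Hl1 : lightlike L1) by (unfold lightlike, L1, mink; simpl; split; nra).
  assert (Hl2 : lightlike L2) by (unfold lightlike, L2, mink; simpl; split; nra).
  assert (Hl3 : lightlike L3).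
  { unfold lightlike, L3, mink; simpl; split; [|nra].
    replace (- (s * R) * (s * R) + s * (p - c / 2) * (s * (p - c / 2)) + s * (q - oy) * (s * (q - oy)))
      with ((s*s) * (-(R*R) + p*p - c*p + c*c/4 + q*q - 2*q*oy + oy*oy)) by field.
    rewrite Hs2, HR2, Eq, Eoy. ring. }
  assert (M23 : mink L2 L3 = - (a*a)).
  { unfold L2, L3, mink; simpl.
    replace (- (s * R) * (s * R) + s * (c / 2) * (s * (p - c / 2)) + s * - oy * (s * (q - oy)))
      with ((s*s) * (-(R*R) + c*p/2 - c*c/4 - q*oy + oy*oy)) by field.
    rewrite Hs2, HR2. replace (q*oy) with ((2*q*oy)/2) by field. rewrite Eoy. nra. }
  assert (M31 : mink L3 L1 = - (b*b)).
  { unfold L3, L1, mink; simpl.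
    replace (- (s * R) * (s * R) + s * (p - c / 2) * (s * (- c / 2)) + s * (q - oy) * (s * - oy))
      with ((s*s) * (-(R*R) - c*p/2 + c*c/4 - q*oy + oy*oy)) by (field).
    rewrite Hs2, HR2. replace (q*oy) with ((2*q*oy)/2) by field. rewrite Eoy. field. }
  assert (M12 : mink L1 L2 = - (c*c)).
  { unfold L1, L2, mink; simpl.
    replace (- (s * R) * (s * R) + s * (- c / 2) * (s * (c / 2)) + s * - oy * (s * - oy))
      with ((s*s) * (-(R*R) - c*c/4 + oy*oy)) by field.
    rewrite Hs2, HR2. field. }
  exists L1, L2, L3, Z.
  split; [|split; [|auto]].
  - unfold dec_triangle. repeat split; try apply Hl1; try apply Hl2; try apply Hl3;
      apply distinct_of; auto; [rewrite M12 | rewrite M23 | rewrite M31]; nra.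
  - assert (ZL : forall L, mink Z L = - c0 L) by (intro L; unfold Z, mink; simpl; ring).
    unfold equidistant, hsd. rewrite !ZL. unfold L1, L2, L3; simpl.
    split; [|split; reflexivity]. unfold hpoint, Z, mink; simpl. split; lra.
Qed.

Lemma sl_exists Lj Lk : lightlike Lj -> lightlike Lk -> 0 < - mink Lj Lk ->
  side_len Lj Lk (ln (- mink Lj Lk / 2)).
Proof.
  intros Hj Hk Hm. set (m := - mink Lj Lk) in *.
  assert (Sjk : mink Lj Lk = - m) by (unfold m; ring).
  assert (Skj : mink Lk Lj = - m) by (rewrite mink_sym; exact Sjk).
  pose proof Hj as [jj Hj0]. pose proof Hk as [kk Hk0].
  set (Pj := vadd (vscale (/2) Lj) (vscale (/m) Lk)).
  set (Pk := vadd (vscale (/m) Lj) (vscale (/2) Lk)).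
  assert (Hi : 0 < / m) by (apply Rinv_0_lt_compat; auto).
  assert (Oj : on_side Pj Lj Lk).
  { split; [split|exists (/2), (/m); repeat split; auto; lra].
    - unfold Pj. rewrite !mink_comb_l, !mink_comb_r. rewrite jj, kk, Sjk, Skj. field. lra.
    - unfold Pj, vadd, vscale; simpl. nra. }
  assert (Ok : on_side Pk Lj Lk).
  { split; [split|exists (/m), (/2); repeat split; auto; lra].
    - unfold Pk. rewrite !mink_comb_l, !mink_comb_r. rewrite jj, kk, Sjk, Skj. field. lra.
    - unfold Pk, vadd, vscale; simpl. nra. }
  assert (Hj' : on_horo Pj Lj) by (unfold on_horo, Pj; rewrite mink_comb_l, jj, Skj; field; lra).
  assert (Hk' : on_horo Pk Lk) by (unfold on_horo, Pk; rewrite mink_comb_l, kk, Sjk; field; lra).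
  exists Pj, Pk. split; [exact Oj|split; [exact Ok|split; [exact Hj'|split; [exact Hk'|]]]].
  symmetry. unfold m. apply sl_val; auto.
Qed.

Lemma lam_ln m : 0 < m -> lam (ln (m / 2)) = sqrt m.
Proof. intro. unfold lam. rewrite exp_ln by lra. f_equal. field. Qed.

Lemma ln_lam l : ln (lam l * lam l / 2) = l.
Proof.
  unfold lam. rewrite sqrt_sqrt by (pose proof (exp_pos l); lra).
  replace (2 * exp l / 2) with (exp l) by field. apply ln_exp.
Qed.

Lemma extract L1 L2 L3 Z l1 l2 l3 : dec_triangle L1 L2 L3 -> equidistant Z L1 L2 L3 ->
  side_len L2 L3 l1 -> side_len L3 L1 l2 -> side_len L1 L2 l3 ->
  exists r, setting Z L1 L2 L3 r (- mink L2 L3) (- mink L3 L1) (- mink L1 L2) /\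
    lam l1 = sqrt (- mink L2 L3) /\ lam l2 = sqrt (- mink L3 L1) /\ lam l3 = sqrt (- mink L1 L2).
Proof.
  intros (H1&H2&H3&D12&D23&D31) (HZ&E12&E23) S1 S2 S3.
  pose proof (mpos _ _ H2 H3 D23) as M1. pose proof (mpos _ _ H3 H1 D31) as M2. pose proof (mpos _ _ H1 H2 D12) as M3.
  pose proof (tpos _ _ HZ H1) as T1. pose proof (tpos _ _ HZ H2) as T2. pose proof (tpos _ _ HZ H3) as T3.
  unfold hsd in E12, E23. apply ln_inv in E12; auto. apply ln_inv in E23; auto.
  exists (- mink Z L1). split.
  - unfold setting. split; [exact HZ|]. split; [exact H1|]. split; [exact H2|]. split; [exact H3|]. repeat split; lra.
  - destruct S1 as (P&Q&A1&A2&A3&A4&->). destruct S2 as (P'&Q'&B1&B2&B3&B4&->). destruct S3 as (P''&Q''&C1&C2&C3&C4&->).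
    rewrite (sl_val L2 L3 P Q H2 H3 M1 A1 A2 A3 A4), (sl_val L3 L1 P' Q' H3 H1 M2 B1 B2 B3 B4), (sl_val L1 L2 P'' Q'' H1 H2 M3 C1 C2 C3 C4). rewrite !lam_ln; auto.
Qed.

Lemma tri_of_setting Z L1 L2 L3 r m1 m2 m3 : setting Z L1 L2 L3 r m1 m2 m3 ->
  tri_ineq (sqrt m1) (sqrt m2) (sqrt m3).
Proof.
  intro S. pose proof (set_Hrel _ _ _ _ _ _ _ _ S) as Hr.
  destruct S as (_&_&_&_&Hr0&_&_&_&_&_&_&Hm1&Hm2&Hm3).
  pose proof (sqrt_lt_R0 _ Hm1). pose proof (sqrt_lt_R0 _ Hm2). pose proof (sqrt_lt_R0 _ Hm3).
  apply her; auto.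
  assert (E : Hf (sqrt m1) (sqrt m2) (sqrt m3) = 2*(m1*m2+m2*m3+m3*m1) - (m1^2+m2^2+m3^2)).
  { unfold Hf.
    replace ((sqrt m1 + sqrt m2 + sqrt m3) * (- sqrt m1 + sqrt m2 + sqrt m3) * (sqrt m1 - sqrt m2 + sqrt m3) * (sqrt m1 + sqrt m2 - sqrt m3))
      with (2*((sqrt m1*sqrt m1)*(sqrt m2*sqrt m2)+(sqrt m2*sqrt m2)*(sqrt m3*sqrt m3)+(sqrt m3*sqrt m3)*(sqrt m1*sqrt m1))
            - ((sqrt m1*sqrt m1)^2+(sqrt m2*sqrt m2)^2+(sqrt m3*sqrt m3)^2)) by ring.
    rewrite !sqrt_sqrt by lra. ring. }
  rewrite E. assert (0 < r^2) by (apply pow_lt; lra).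
  assert (0 < 2*m1*m2*m3) by (assert (0 < m1*m2) by nra; nra).
  nra.
Qed.

Lemma angles_of_tri a b c : tri_ineq a b c ->
  angle_triple (PI - acos (Xf a b c)) (PI - acos (Xf b c a)) (PI - acos (Xf c a b)).
Proof.
  intro T. pose proof (angle_sum _ _ _ T) as AS.
  pose proof (X_bound _ _ _ T) as B1. pose proof (X_bound _ _ _ (tri_rot _ _ _ T)) as B2.
  pose proof (X_bound _ _ _ (tri_rot _ _ _ (tri_rot _ _ _ T))) as B3.
  pose proof (acos_bound_lt _ B1). pose proof (acos_bound_lt _ B2). pose proof (acos_bound_lt _ B3).
  unfold angle_triple. lra.
Qed.

Lemma Sf_rot a b c : Sf b c a = Sf a b c.
Proof. unfold Sf. rewrite Hf_rot. f_equal. ring. Qed.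

Lemma sqrt_exp_lam l : sqrt (exp l) = lam l / sqrt 2.
Proof.
  unfold lam. rewrite sqrt_mult by (try pose proof (exp_pos l); lra).
  field. apply Rgt_not_eq, sqrt_lt_R0; lra.
Qed.

Lemma Sf_pos a b c : tri_ineq a b c -> 0 < Sf a b c.
Proof.
  intro T. pose proof (tri_H _ _ _ T). destruct T as (?&?&?&_). unfold Sf.
  apply Rdiv_lt_0_compat. apply sqrt_lt_R0; auto. repeat apply Rmult_lt_0_compat; lra.
Qed.

Lemma sine_of_tri l1 l2 l3 : tri_ineq (lam l1) (lam l2) (lam l3) ->
  sine_rel l1 l2 l3 (PI - acos (Xf (lam l1) (lam l2) (lam l3))) (PI - acos (Xf (lam l2) (lam l3) (lam l1)))
    (PI - acos (Xf (lam l3) (lam l1) (lam l2))).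
Proof.
  intro T. pose proof T as T2. apply tri_rot in T2. pose proof T2 as T3. apply tri_rot in T3.
  pose proof (Sf_pos _ _ _ T) as SP. unfold sine_rel.
  rewrite !sin_PI_x, (sin_acosX _ _ _ T), (sin_acosX _ _ _ T2), (sin_acosX _ _ _ T3).
  rewrite (Sf_rot (lam l2) (lam l3) (lam l1)), (Sf_rot (lam l1) (lam l2) (lam l3)).
  rewrite !sqrt_exp_lam.
  destruct T as (?&?&?&_).
  assert (0 < sqrt 2) by (apply sqrt_lt_R0; lra).
  split; field; repeat split; lra.
Qed.

Lemma angles_unique l1 l2 l3 s1 s2 s3 : tri_ineq (lam l1) (lam l2) (lam l3) ->
  angle_triple s1 s2 s3 -> sine_rel l1 l2 l3 s1 s2 s3 ->
  s1 = PI - acos (Xf (lam l1) (lam l2) (lam l3)) /\ s2 = PI - acos (Xf (lam l2) (lam l3) (lam l1)) /\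
  s3 = PI - acos (Xf (lam l3) (lam l1) (lam l2)).
Proof.
  intros T A [R1 R2].
  destruct A as (A1&A2&A3&AS).
  pose proof (sin_gt_0 _ (proj1 A1) (proj2 A1)) as P1.
  pose proof (sin_gt_0 _ (proj1 A2) (proj2 A2)) as P2.
  pose proof (sin_gt_0 _ (proj1 A3) (proj2 A3)) as P3.
  rewrite !sqrt_exp_lam in R1, R2.
  destruct T as (Ha&Hb&Hc&_).
  set (a := lam l1) in *. set (b := lam l2) in *. set (c := lam l3) in *.
  assert (0 < sqrt 2) by (apply sqrt_lt_R0; lra).
  set (k := sin s1 / a).
  assert (K1 : sin s1 = k * a) by (unfold k; field; lra).
  assert (NZ : a / sqrt 2 / sin s1 <> 0) by (apply Rgt_not_eq; repeat apply Rdiv_lt_0_compat; auto).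
  assert (E2 : sin s2 * (a / sqrt 2 / sin s1) = b / sqrt 2) by (rewrite R1; field; lra).
  assert (E3 : sin s3 * (a / sqrt 2 / sin s1) = c / sqrt 2) by (rewrite R1, R2; field; lra).
  assert (K2 : sin s2 = k * b).
  { unfold k. replace (sin s1 / a * b) with ((b / sqrt 2) / (a / sqrt 2 / sin s1)) by (field; lra).
    rewrite <- E2. field; repeat split; lra. }
  assert (K3 : sin s3 = k * c).
  { unfold k. replace (sin s1 / a * c) with ((c / sqrt 2) / (a / sqrt 2 / sin s1)) by (field; lra).
    rewrite <- E3. field; repeat split; lra. }
  assert (Hk : k <> 0) by (unfold k; apply Rgt_not_eq, Rdiv_lt_0_compat; auto).
  set (al := PI - s1). set (be := PI - s2). set (ga := PI - s3).
  assert (Sa : sin al = k * a) by (unfold al; rewrite sin_PI_x; auto).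
  assert (Sb : sin be = k * b) by (unfold be; rewrite sin_PI_x; auto).
  assert (Sc : sin ga = k * c) by (unfold ga; rewrite sin_PI_x; auto).
  assert (Sum : al + be + ga = PI) by (unfold al, be, ga; lra).
  pose proof (uni_cos a b c al be ga k Ha Hb Hc Sum Hk Sa Sb Sc) as C1.
  pose proof (uni_cos b c a be ga al k Hb Hc Ha ltac:(lra) Hk Sb Sc Sa) as C2.
  pose proof (uni_cos c a b ga al be k Hc Ha Hb ltac:(lra) Hk Sc Sa Sb) as C3.
  rewrite <- C1, <- C2, <- C3.
  rewrite !acos_cos by (unfold al, be, ga; lra).
  unfold al, be, ga. lra.
Qed.

Lemma part1 l1 l2 l3 : realizable l1 l2 l3 <-> tri_ineq (lam l1) (lam l2) (lam l3).
Proof.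
  split.
  - intros (L1&L2&L3&Z&D&E&S1&S2&S3).
    destruct (extract _ _ _ _ _ _ _ D E S1 S2 S3) as (r&S&->&->&->).
    eapply tri_of_setting; eauto.
  - intro T. destruct (hyper_exists _ _ _ T) as (L1&L2&L3&Z&D&E&M1&M2&M3).
    exists L1, L2, L3, Z. split; auto. split; auto.
    pose proof D as (H1&H2&H3&D12&D23&D31).
    pose proof (mpos _ _ H2 H3 D23). pose proof (mpos _ _ H3 H1 D31). pose proof (mpos _ _ H1 H2 D12).
    pose proof (sl_exists _ _ H2 H3 ltac:(auto)) as S1.
    pose proof (sl_exists _ _ H3 H1 ltac:(auto)) as S2.
    pose proof (sl_exists _ _ H1 H2 ltac:(auto)) as S3.
    rewrite M1, Ropp_involutive, ln_lam in S1.
    rewrite M2, Ropp_involutive, ln_lam in S2.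
    rewrite M3, Ropp_involutive, ln_lam in S3.
    auto.
Qed.

Lemma lam_of m : 0 < m -> lam (ln (m * m / 2)) = m.
Proof. intro. rewrite lam_ln by nra. apply sqrt_square; lra. Qed.

Lemma part2 m1 m2 m3 : tri_ineq m1 m2 m3 ->
  exists l1 l2 l3, realizable l1 l2 l3 /\ m1 = lam l1 /\ m2 = lam l2 /\ m3 = lam l3.
Proof.
  intro T. pose proof T as (?&?&?&_).
  exists (ln (m1*m1/2)), (ln (m2*m2/2)), (ln (m3*m3/2)).
  rewrite !lam_of by auto. split; auto. apply part1. rewrite !lam_of by auto. auto.
Qed.

Lemma part3a l1 l2 l3 : realizable l1 l2 l3 ->
  exists t1 t2 t3, angle_triple t1 t2 t3 /\ sine_rel l1 l2 l3 t1 t2 t3 /\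
    forall s1 s2 s3, angle_triple s1 s2 s3 -> sine_rel l1 l2 l3 s1 s2 s3 -> s1 = t1 /\ s2 = t2 /\ s3 = t3.
Proof.
  intro R. apply part1 in R.
  do 3 eexists. split; [apply angles_of_tri; exact R|]. split; [apply sine_of_tri; exact R|].
  intros s1 s2 s3 A S. apply angles_unique; auto.
Qed.

Lemma cos_lt_1 x : 0 < x < PI -> cos x < 1.
Proof. intro. rewrite <- cos_0. apply cos_decreasing_1; lra. Qed.

Lemma sin_tri t1 t2 t3 : angle_triple t1 t2 t3 -> sin t1 < sin t2 + sin t3.
Proof.
  intros (A1&A2&A3&S).
  assert (E : sin t1 = sin (PI - t2) * cos (PI - t3) + cos (PI - t2) * sin (PI - t3)).
  { rewrite <- sin_plus. f_equal. lra. }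
  rewrite !sin_PI_x in E.
  pose proof (cos_lt_1 (PI - t2) ltac:(lra)). pose proof (cos_lt_1 (PI - t3) ltac:(lra)).
  pose proof (sin_gt_0 t2 ltac:(lra) ltac:(lra)). pose proof (sin_gt_0 t3 ltac:(lra) ltac:(lra)).
  nra.
Qed.

Lemma part3b t1 t2 t3 : angle_triple t1 t2 t3 ->
  exists l1 l2 l3, realizable l1 l2 l3 /\ sine_rel l1 l2 l3 t1 t2 t3.
Proof.
  intro A. pose proof A as (A1&A2&A3&S).
  pose proof (sin_gt_0 t1 ltac:(lra) ltac:(lra)). pose proof (sin_gt_0 t2 ltac:(lra) ltac:(lra)).
  pose proof (sin_gt_0 t3 ltac:(lra) ltac:(lra)).
  assert (Ex : forall t, 0 < sin t -> sqrt (exp (ln (sin t * sin t))) = sin t).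
  { intros t h. rewrite exp_ln by nra. apply sqrt_square; lra. }
  assert (Lm : forall t, 0 < sin t -> lam (ln (sin t * sin t)) = sqrt 2 * sin t).
  { intros t h. unfold lam. rewrite exp_ln by nra. rewrite sqrt_mult by nra. rewrite sqrt_square by lra. reflexivity. }
  exists (ln (sin t1 * sin t1)), (ln (sin t2 * sin t2)), (ln (sin t3 * sin t3)).
  split.
  - apply part1. rewrite !Lm by auto.
    pose proof (sin_tri _ _ _ A). pose proof (sin_tri t2 t3 t1 ltac:(unfold angle_triple; lra)).
    pose proof (sin_tri t3 t1 t2 ltac:(unfold angle_triple; lra)).
    assert (0 < sqrt 2) by (apply sqrt_lt_R0; lra).
    unfold tri_ineq. repeat split; nra.
  - unfold sine_rel. rewrite !Ex by auto. split; field; lra.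
Qed.

Lemma part3c t1 t2 t3 l1 l2 l3 k1 k2 k3 : angle_triple t1 t2 t3 ->
  sine_rel l1 l2 l3 t1 t2 t3 -> sine_rel k1 k2 k3 t1 t2 t3 ->
  exists c, k1 = l1 + c /\ k2 = l2 + c /\ k3 = l3 + c.
Proof.
  intros A [R1 R2] [Q1 Q2]. pose proof A as (A1&A2&A3&S).
  pose proof (sin_gt_0 t1 ltac:(lra) ltac:(lra)). pose proof (sin_gt_0 t2 ltac:(lra) ltac:(lra)).
  pose proof (sin_gt_0 t3 ltac:(lra) ltac:(lra)).
  assert (Hs : forall l, sqrt (exp l) * sqrt (exp l) = exp l) by (intro; apply sqrt_sqrt; pose proof (exp_pos l); lra).
  assert (Hp : forall l, 0 < sqrt (exp l)) by (intro; apply sqrt_lt_R0, exp_pos).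
  set (e1 := sqrt (exp l1)) in *. set (e2 := sqrt (exp l2)) in *. set (e3 := sqrt (exp l3)) in *.
  set (f1 := sqrt (exp k1)) in *. set (f2 := sqrt (exp k2)) in *. set (f3 := sqrt (exp k3)) in *.
  assert (P : forall x, exp x = sqrt (exp x) * sqrt (exp x)) by (intro; rewrite Hs; auto).
  exists (k1 - l1). 
  assert (G : forall a b, exp a * exp (b - a) = exp b) by (intros; rewrite <- exp_plus; f_equal; ring).
  assert (Ek : forall a b c d, exp a * exp d = exp b * exp c -> d = b + (c - a)).
  { intros a b c d h. apply exp_inv. rewrite exp_plus. apply Rmult_eq_reg_l with (exp a); [|pose proof (exp_pos a); lra].
    rewrite h. rewrite <- (G a c). ring. }
  assert (q2 : f1 * e2 = f2 * e1).
  { apply Rmult_eq_reg_r with (/ (sin t1 * sin t2)); [|apply Rinv_neq_0_compat; nra].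
    replace (f1 * e2 * / (sin t1 * sin t2)) with ((f1 / sin t1) * (e2 / sin t2)) by (field; lra).
    replace (f2 * e1 * / (sin t1 * sin t2)) with ((f2 / sin t2) * (e1 / sin t1)) by (field; lra).
    rewrite Q1, R1. ring. }
  assert (q3 : f1 * e3 = f3 * e1).
  { apply Rmult_eq_reg_r with (/ (sin t1 * sin t3)); [|apply Rinv_neq_0_compat; nra].
    replace (f1 * e3 * / (sin t1 * sin t3)) with ((f1 / sin t1) * (e3 / sin t3)) by (field; lra).
    replace (f3 * e1 * / (sin t1 * sin t3)) with ((f3 / sin t3) * (e1 / sin t1)) by (field; lra).
    rewrite Q1, R1, Q2, R2. ring. }
  split; [ring|split].
  - apply (Ek l1 l2 k1 k2). rewrite (P l1), (P l2), (P k1), (P k2). fold e1 e2 f1 f2.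
    replace (e1 * e1 * (f2 * f2)) with ((f2*e1)*(f2*e1)) by ring. rewrite <- q2. ring.
  - apply (Ek l1 l3 k1 k3). rewrite (P l1), (P l3), (P k1), (P k3). fold e1 e3 f1 f3.
    replace (e1 * e1 * (f3 * f3)) with ((f3*e1)*(f3*e1)) by ring. rewrite <- q3. ring.
Qed.

Lemma sign_eq x y D : x * x = 1 -> y * y = 1 -> x * D < 0 -> y * D < 0 -> x = y.
Proof.
  intros Hx Hy H1 H2.
  assert (E : (x - y) * (x + y) = 0) by (ring_simplify; lra).
  apply Rmult_integral in E. destruct E as [E|E]; [lra|].
  assert (y = - x) by lra. subst y. nra.
Qed.

Lemma sign_choice D : D <> 0 -> exists e, e * e = 1 /\ e * D < 0.
Proof.
  intro HD. destruct (Rlt_or_le D 0) as [h|h].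
  - exists 1. split; lra.
  - exists (-1). split; [lra|]. destruct h; [lra|congruence].
Qed.

Lemma part6 (L1 L2 L3 Z : V3) (l1 l2 l3 : R) :
     dec_triangle L1 L2 L3 -> equidistant Z L1 L2 L3 ->
     side_len L2 L3 l1 -> side_len L3 L1 l2 -> side_len L1 L2 l3 ->
     (exists v1 v2 v3, hray Z L1 L2 L3 v1 /\ hray Z L2 L3 L1 v2 /\ hray Z L3 L1 L2 v3) /\
     (forall v1 v2 v3, hray Z L1 L2 L3 v1 -> hray Z L2 L3 L1 v2 -> hray Z L3 L1 L2 v3 ->
        let t1 := hsector Z v1 v2 v3 in
        let t2 := hsector Z v2 v3 v1 in
        let t3 := hsector Z v3 v1 v2 in
        angle_triple t1 t2 t3 /\ sine_rel l1 l2 l3 t1 t2 t3 /\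
        (exists P1 P2 P3 : pt2, eucl_triangle P1 P2 P3 (lam l1) (lam l2) (lam l3)) /\
        (forall (P1 P2 P3 O : pt2),
           eucl_triangle P1 P2 P3 (lam l1) (lam l2) (lam l3) ->
           circumcenter O P1 P2 P3 ->
           (exists u1 u2 u3, eray O P1 P2 P3 u1 /\ eray O P2 P3 P1 u2 /\ eray O P3 P1 P2 u3) /\
           (forall u1 u2 u3, eray O P1 P2 P3 u1 -> eray O P2 P3 P1 u2 -> eray O P3 P1 P2 u3 ->
              esector u1 u2 u3 = t1 /\ esector u2 u3 u1 = t2 /\ esector u3 u1 u2 = t3)) /\
        (exists s1 s2 s3, bis_len Z L1 L2 L3 s1 /\ bis_len Z L2 L3 L1 s2 /\
                          bis_len Z L3 L1 L2 s3) /\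
        (forall s, bis_len Z L1 L2 L3 s -> s = artanh (cos (PI - t1))) /\
        (forall s, bis_len Z L2 L3 L1 s -> s = artanh (cos (PI - t2))) /\
        (forall s, bis_len Z L3 L1 L2 s -> s = artanh (cos (PI - t3)))).
Proof.
  intros Dt Eq S1 S2 S3.
  destruct (extract _ _ _ _ _ _ _ Dt Eq S1 S2 S3) as (r&S&Hl1&Hl2&Hl3).
  set (m1 := - mink L2 L3) in *. set (m2 := - mink L3 L1) in *. set (m3 := - mink L1 L2) in *.
  clearbody m1 m2 m3.
  pose proof (tri_of_setting _ _ _ _ _ _ _ _ S) as T.
  pose proof (setting_rot _ _ _ _ _ _ _ _ S) as Sb. pose proof (setting_rot _ _ _ _ _ _ _ _ Sb) as Sc.
  pose proof (set_D2 _ _ _ _ _ _ _ _ S) as D2.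
  assert (Hm : 0 < m1 /\ 0 < m2 /\ 0 < m3) by (destruct S as (_&_&_&_&_&_&_&_&_&_&_&?&?&?); auto).
  set (D := det3 L2 L3 L1) in *.
  assert (HD : D <> 0).
  { intro h. rewrite h in D2. assert (0 < m1*m2) by nra. nra. }
  assert (Db : det3 L3 L1 L2 = D) by (unfold D, det3; ring).
  assert (Dc : det3 L1 L2 L3 = D) by (unfold D, det3; ring).
  destruct (sign_choice D HD) as (e&He&HeD).
  split.
  - exists (hv e Z L2 L3), (hv e Z L3 L1), (hv e Z L1 L2).
    split; [|split].
    + apply (hray_exists _ _ _ _ _ _ _ _ e S He HeD).
    + apply (hray_exists _ _ _ _ _ _ _ _ e Sb He). rewrite Db; auto.
    + apply (hray_exists _ _ _ _ _ _ _ _ e Sc He). rewrite Dc; auto.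
  - intros v1 v2 v3 R1 R2 R3 t1 t2 t3.
    destruct (hray_form _ _ _ _ _ _ _ _ _ S R1) as (e1&He1&->).
    destruct (hray_form _ _ _ _ _ _ _ _ _ Sb R2) as (e2&He2&->).
    destruct (hray_form _ _ _ _ _ _ _ _ _ Sc R3) as (e3&He3&->).
    pose proof (hray_sign _ _ _ _ _ _ _ _ _ S He1 R1) as G1.
    pose proof (hray_sign _ _ _ _ _ _ _ _ _ Sb He2 R2) as G2. rewrite Db in G2.
    pose proof (hray_sign _ _ _ _ _ _ _ _ _ Sc He3 R3) as G3. rewrite Dc in G3.
    fold D in G1.
    assert (q1 : e1 = e) by (apply sign_eq with D; auto).
    assert (q2 : e2 = e) by (apply sign_eq with D; auto).
    assert (q3 : e3 = e) by (apply sign_eq with D; auto).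
    subst e1 e2 e3.
    assert (Et1 : t1 = PI - acos (Xf (lam l1) (lam l2) (lam l3))).
    { unfold t1. rewrite Hl1, Hl2, Hl3. apply (hsector_val _ _ _ _ _ _ _ _ e S He). }
    assert (Et2 : t2 = PI - acos (Xf (lam l2) (lam l3) (lam l1))).
    { unfold t2. rewrite Hl1, Hl2, Hl3. apply (hsector_val _ _ _ _ _ _ _ _ e Sb He). }
    assert (Et3 : t3 = PI - acos (Xf (lam l3) (lam l1) (lam l2))).
    { unfold t3. rewrite Hl1, Hl2, Hl3. apply (hsector_val _ _ _ _ _ _ _ _ e Sc He). }
    clearbody t1 t2 t3. subst t1 t2 t3.
    rewrite <- Hl1, <- Hl2, <- Hl3 in T.
    split; [apply angles_of_tri; auto|].
    split; [apply sine_of_tri; auto|].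
    split; [apply eucl_exists; auto|].
    split.
    + intros P1 P2 P3 O Et Cc.
      assert (ES : esetting O P1 P2 P3 (lam l1) (lam l2) (lam l3)) by (split; auto).
      pose proof (esetting_rot _ _ _ _ _ _ _ ES) as ESb. pose proof (esetting_rot _ _ _ _ _ _ _ ESb) as ESc.
      pose proof (es_E2 _ _ _ _ _ _ _ ES) as E2. pose proof (tri_H _ _ _ T) as HH.
      set (E := orient P2 P3 P1) in *.
      assert (HE : E <> 0) by (intro h; rewrite h in E2; lra).
      assert (Eb : orient P3 P1 P2 = E) by (unfold E, orient, ecross, psub; simpl; ring).
      assert (Ec : orient P1 P2 P3 = E) by (unfold E, orient, ecross, psub; simpl; ring).
      destruct (sign_choice E HE) as (τ&Ht&HtE).
      split.
      * exists (ev τ P2 P3), (ev τ P3 P1), (ev τ P1 P2). split; [|split].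
        -- apply (eray_exists _ _ _ _ _ _ _ τ ES Ht HtE).
        -- apply (eray_exists _ _ _ _ _ _ _ τ ESb Ht). rewrite Eb; auto.
        -- apply (eray_exists _ _ _ _ _ _ _ τ ESc Ht). rewrite Ec; auto.
      * intros u1 u2 u3 U1 U2 U3.
        destruct (eray_form _ _ _ _ _ _ _ _ ES U1) as (τ1&Ht1&->).
        destruct (eray_form _ _ _ _ _ _ _ _ ESb U2) as (τ2&Ht2&->).
        destruct (eray_form _ _ _ _ _ _ _ _ ESc U3) as (τ3&Ht3&->).
        pose proof (eray_sign _ _ _ _ _ _ _ _ ES Ht1 U1) as K1.
        pose proof (eray_sign _ _ _ _ _ _ _ _ ESb Ht2 U2) as K2. rewrite Eb in K2.
        pose proof (eray_sign _ _ _ _ _ _ _ _ ESc Ht3 U3) as K3. rewrite Ec in K3.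
        fold E in K1.
        rewrite (sign_eq τ1 τ E) by auto. rewrite (sign_eq τ2 τ E) by auto. rewrite (sign_eq τ3 τ E) by auto.
        split; [|split].
        -- apply (esector_val _ _ _ _ _ _ _ τ ES Ht).
        -- apply (esector_val _ _ _ _ _ _ _ τ ESb Ht).
        -- apply (esector_val _ _ _ _ _ _ _ τ ESc Ht).
    + assert (CB : forall x, -1 < x < 1 -> cos (PI - (PI - acos x)) = x).
      { intros x hx. replace (PI - (PI - acos x)) with (acos x) by ring. apply cos_acos; lra. }
      pose proof (X_bound _ _ _ T) as B1. pose proof (X_bound _ _ _ (tri_rot _ _ _ T)) as B2.
      pose proof (X_bound _ _ _ (tri_rot _ _ _ (tri_rot _ _ _ T))) as B3.
      rewrite !CB by auto.
      split; [|split; [|split]].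
      * destruct (bis_exists _ _ _ _ _ _ _ _ S) as (s1&H1).
        destruct (bis_exists _ _ _ _ _ _ _ _ Sb) as (s2&H2).
        destruct (bis_exists _ _ _ _ _ _ _ _ Sc) as (s3&H3). exists s1, s2, s3. auto.
      * intros s Hs. rewrite (bis_val _ _ _ _ _ _ _ _ _ S Hs). rewrite Hl1, Hl2, Hl3. reflexivity.
      * intros s Hs. rewrite (bis_val _ _ _ _ _ _ _ _ _ Sb Hs). rewrite Hl1, Hl2, Hl3. reflexivity.
      * intros s Hs. rewrite (bis_val _ _ _ _ _ _ _ _ _ Sc Hs). rewrite Hl1, Hl2, Hl3. reflexivity.
Qed.

Theorem proposition4 :
  (* (i) <-> (ii):  lambda_i = sqrt(2 e^{l_i}) *)
  (forall l1 l2 l3 : R,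
     realizable l1 l2 l3 <-> tri_ineq (lam l1) (lam l2) (lam l3)) /\
  (forall m1 m2 m3 : R, tri_ineq m1 m2 m3 ->
     exists l1 l2 l3, realizable l1 l2 l3 /\
       m1 = lam l1 /\ m2 = lam l2 /\ m3 = lam l3) /\
  (* (i) -> (iii): each realizable triple determines a unique angle triple *)
  (forall l1 l2 l3 : R, realizable l1 l2 l3 ->
     exists t1 t2 t3, angle_triple t1 t2 t3 /\ sine_rel l1 l2 l3 t1 t2 t3 /\
       forall s1 s2 s3, angle_triple s1 s2 s3 -> sine_rel l1 l2 l3 s1 s2 s3 ->
         s1 = t1 /\ s2 = t2 /\ s3 = t3) /\
  (* (iii) -> (i): surjective, and injective up to a common additive constant *)
  (forall t1 t2 t3 : R, angle_triple t1 t2 t3 ->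
     exists l1 l2 l3, realizable l1 l2 l3 /\ sine_rel l1 l2 l3 t1 t2 t3) /\
  (forall t1 t2 t3 l1 l2 l3 k1 k2 k3 : R, angle_triple t1 t2 t3 ->
     realizable l1 l2 l3 -> sine_rel l1 l2 l3 t1 t2 t3 ->
     realizable k1 k2 k3 -> sine_rel k1 k2 k3 t1 t2 t3 ->
     exists c, k1 = l1 + c /\ k2 = l2 + c /\ k3 = l3 + c) /\
  (* geometric meaning of the angles and bisector lengths *)
  (forall (L1 L2 L3 Z : V3) (l1 l2 l3 : R),
     dec_triangle L1 L2 L3 -> equidistant Z L1 L2 L3 ->
     side_len L2 L3 l1 -> side_len L3 L1 l2 -> side_len L1 L2 l3 ->
     (exists v1 v2 v3, hray Z L1 L2 L3 v1 /\ hray Z L2 L3 L1 v2 /\ hray Z L3 L1 L2 v3) /\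
     (forall v1 v2 v3, hray Z L1 L2 L3 v1 -> hray Z L2 L3 L1 v2 -> hray Z L3 L1 L2 v3 ->
        let t1 := hsector Z v1 v2 v3 in
        let t2 := hsector Z v2 v3 v1 in
        let t3 := hsector Z v3 v1 v2 in
        angle_triple t1 t2 t3 /\ sine_rel l1 l2 l3 t1 t2 t3 /\
        (* coincidence with the Euclidean angles at the circumcenter *)
        (exists P1 P2 P3 : pt2, eucl_triangle P1 P2 P3 (lam l1) (lam l2) (lam l3)) /\
        (forall (P1 P2 P3 O : pt2),
           eucl_triangle P1 P2 P3 (lam l1) (lam l2) (lam l3) ->
           circumcenter O P1 P2 P3 ->
           (exists u1 u2 u3, eray O P1 P2 P3 u1 /\ eray O P2 P3 P1 u2 /\ eray O P3 P1 P2 u3) /\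
           (forall u1 u2 u3, eray O P1 P2 P3 u1 -> eray O P2 P3 P1 u2 -> eray O P3 P1 P2 u3 ->
              esector u1 u2 u3 = t1 /\ esector u2 u3 u1 = t2 /\ esector u3 u1 u2 = t3)) /\
        (* signed bisector lengths *)
        (exists s1 s2 s3, bis_len Z L1 L2 L3 s1 /\ bis_len Z L2 L3 L1 s2 /\
                          bis_len Z L3 L1 L2 s3) /\
        (forall s, bis_len Z L1 L2 L3 s -> s = artanh (cos (PI - t1))) /\
        (forall s, bis_len Z L2 L3 L1 s -> s = artanh (cos (PI - t2))) /\
        (forall s, bis_len Z L3 L1 L2 s -> s = artanh (cos (PI - t3))))).
Proof.
  split; [exact part1|]. split; [exact part2|]. split; [exact part3a|]. split; [exact part3b|].
  split.
  - intros t1 t2 t3 l1 l2 l3 k1 k2 k3 A _ Rl _ Rk. exact (part3c _ _ _ _ _ _ _ _ _ A Rl Rk).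
  - exact part6.
Qed.
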